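(* Let $\mathbf{W}^0$ be a real $N\times N$ matrix, let $a,w\in\mathbb{R}$ and $S_x>0$ with the spectral radius of $aw\mathbf{W}^0$ less than $1$, let $\mathbf{S}_y=S_x(\mathbf{I}-aw\mathbf{W}^0)^{-1}(\mathbf{I}-aw(\mathbf{W}^0)^T)^{-1}$, and set $g=Naw$. Let $\{1,\dots,N\}=V_1\sqcup\dots\sqcup V_b$ be a partition into nonempty subpopulations of sizes $N_\alpha=|V_\alpha|$, and let $\boldsymbol\kappa_n,\boldsymbol\kappa_{n,m}$ be the $b\times b$ subpopulation motif cumulants defined below. Assume that for some submultiplicative matrix norm $\|\cdot\|$, $\sum_{n\ge1}|g|^n\|\boldsymbol\kappa_n\mathbf{E}\|<1$, $\sum_{n\ge1}|g|^n\|\mathbf{E}\boldsymbol\kappa_n^T\|<1$ and $\sum_{n,m\ge1}|g|^{n+m}\|\boldsymbol\kappa_{n,m}\|<\infty$. Then $$\frac{\langle\mathbf{S}_y\rangle_B}{S_x}=\frac1N\Big(\mathbf{I}-\sum_{n=1}^\infty g^n\boldsymbol\kappa_n\mathbf{E}\Big)^{-1}\Big(\mathbf{E}^{-1}+\sum_{n,m=1}^\infty g^{n+m}\boldsymbol\kappa_{n,m}\Big)\Big(\mathbf{I}-\sum_{m=1}^\infty g^m\mathbf{E}\boldsymbol\kappa_m^T\Big)^{-1}.$$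
   Context: $\mathbf{S}_y$ is the zero-frequency cross-spectrum matrix of a network of linearly interacting stochastic units with coupling $w\mathbf{W}^0$, identical response (zero-frequency value $a$) and independent baseline noise of spectrum $S_x$. Block average: for an $N\times N$ matrix $\mathbf{M}$, $\langle\mathbf{M}\rangle_B$ is the $b\times b$ matrix with $(\langle\mathbf{M}\rangle_B)_{p,q}=\frac{1}{N_pN_q}\sum_{i\in V_p,\,j\in V_q}\mathbf{M}_{ij}$. $\mathbf{E}=\mathrm{diag}(N_1/N,\dots,N_b/N)$. Subpopulation motif moments: for $n,m\ge0$, $\boldsymbol\mu_{n,m}=\langle(\mathbf{W}^0)^n((\mathbf{W}^0)^T)^m\rangle_B/N^{n+m-1}$ (a $b\times b$ matrix) and $\boldsymbol\mu_n:=\boldsymbol\mu_{n,0}$. A composition of a positive integer $n$ is an ordered tuple $(c_1,\dots,c_t)$ of positive integers summing to $n$; $\mathcal{C}(n)$ is the set of compositions of $n$. Subpopulation motif cumulants: the $b\times b$ matrices $\boldsymbol\kappa_n$ ($n\ge1$) and $\boldsymbol\kappa_{n,m}$ ($n,m\ge1$) are defined recursively (uniquely) by requiring, for all $n,m\ge1$, $$\boldsymbol\mu_n=\sum_{(c_1,\dots,c_t)\in\mathcal{C}(n)}\boldsymbol\kappa_{c_1}\mathbf{E}\boldsymbol\kappa_{c_2}\mathbf{E}\cdots\mathbf{E}\boldsymbol\kappa_{c_t},$$ $$\boldsymbol\mu_{n,m}=\sum_{\substack{(c_1,\dots,c_t)\in\mathcal{C}(n)\\(d_1,\dots,d_s)\in\mathcal{C}(m)}}\boldsymbol\kappa_{c_1}\mathbf{E}\cdots\boldsymbol\kappa_{c_{t-1}}\mathbf{E}\,\big(\boldsymbol\kappa_{c_t,d_1}+\boldsymbol\kappa_{c_t}\mathbf{E}\boldsymbol\kappa_{d_1}^T\big)\,\mathbf{E}\boldsymbol\kappa_{d_2}^T\cdots\mathbf{E}\boldsymbol\kappa_{d_s}^T,$$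 where the factors before (after) the middle bracket are absent when $t=1$ ($s=1$). *)

(* Defs.v *)
(* real numbers from Stdlib Reals; matrices are functions
   nat -> nat -> R, only entries with indices below the relevant dimension
   are meaningful. *)
From Stdlib Require Import Reals List Arith.
Import ListNotations.
Open Scope R_scope.

Definition mat := nat -> nat -> R.

Fixpoint rsum (n : nat) (f : nat -> R) : R :=
  match n with O => 0 | S k => rsum k f + f k end.

Definition mzero : mat := fun _ _ => 0.
Definition mid : mat := fun i j => if Nat.eqb i j then 1 else 0.
Definition madd (A B : mat) : mat := fun i j => A i j + B i j.
Definition mscale (c : R) (A : mat) : mat := fun i j => c * A i j.
Definition mtr (A : mat) : mat := fun i j => A j i.
Definition mmul (n : nat) (A B : mat) : mat :=
  fun i j => rsum n (fun k => A i k * B k j).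
Fixpoint mpow (n : nat) (A : mat) (k : nat) : mat :=
  match k with O => mid | S k' => mmul n (mpow n A k') A end.
Definition msumL (l : list mat) : mat := fold_right madd mzero l.

Definition is_inverse (n : nat) (A B : mat) : Prop :=
  forall i j, (i < n)%nat -> (j < n)%nat ->
    mmul n A B i j = mid i j /\ mmul n B A i j = mid i j.

(* spectral radius of the real n x n matrix A is < 1: every complex
   eigenvalue alpha + i beta (eigenvector u + i v <> 0) has modulus < 1 *)
Definition spectral_radius_lt1 (n : nat) (A : mat) : Prop :=
  forall (alpha beta : R) (u v : nat -> R),
    (exists i, (i < n)%nat /\ (u i <> 0 \/ v i <> 0)) ->
    (forall i, (i < n)%nat ->
       rsum n (fun k => A i k * u k) = alpha * u i - beta * v i /\
       rsum n (fun k => A i k * v k) = beta * u i + alpha * v i) ->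
    alpha ^ 2 + beta ^ 2 < 1.

(* partition of {0..N-1} into b nonempty blocks V_p = {i | blk i = p} *)
Definition is_partition (N b : nat) (blk : nat -> nat) : Prop :=
  (forall i, (i < N)%nat -> (blk i < b)%nat) /\
  (forall p, (p < b)%nat -> exists i, (i < N)%nat /\ blk i = p).

Definition bsize (N : nat) (blk : nat -> nat) (p : nat) : R :=
  rsum N (fun i => if Nat.eqb (blk i) p then 1 else 0).

Definition blockavg (N : nat) (blk : nat -> nat) (M : mat) : mat :=
  fun p q => / (bsize N blk p * bsize N blk q) *
    rsum N (fun i => rsum N (fun j =>
      if andb (Nat.eqb (blk i) p) (Nat.eqb (blk j) q) then M i j else 0)).

Definition Emat (N : nat) (blk : nat -> nat) : mat :=
  fun p q => if Nat.eqb p q then bsize N blk p / INR N else 0.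
Definition Einv (N : nat) (blk : nat -> nat) : mat :=
  fun p q => if Nat.eqb p q then INR N / bsize N blk p else 0.

Definition mu (N : nat) (blk : nat -> nat) (W : mat) (n m : nat) : mat :=
  fun p q => INR N / INR N ^ (n + m) *
    blockavg N blk (mmul N (mpow N W n) (mpow N (mtr W) m)) p q.

(* compositions of n (ordered tuples of positive integers summing to n) *)
Fixpoint compsF (fuel n : nat) : list (list nat) :=
  match fuel with
  | O => match n with O => [[]] | _ => [] end
  | S f => match n with
           | O => [[]]
           | _ => flat_map (fun c => map (cons c) (compsF f (n - c))) (seq 1 n)
           end
  end.
Definition comps (n : nat) : list (list nat) := compsF n n.

Fixpoint chainK (b : nat) (E : mat) (kap : nat -> mat) (l : list nat) : mat :=
  match l with
  | [] => mid
  | c :: l' => match l' with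
               | [] => kap c
               | _ :: _ => mmul b (mmul b (kap c) E) (chainK b E kap l')
               end
  end.

Definition Lpart (b : nat) (E : mat) (kap : nat -> mat) (l : list nat) : mat :=
  fold_right (fun c acc => mmul b (mmul b (kap c) E) acc) mid l.
Definition Rpart (b : nat) (E : mat) (kap : nat -> mat) (l : list nat) : mat :=
  fold_right (fun d acc => mmul b (mmul b E (mtr (kap d))) acc) mid l.

Definition mixterm (b : nat) (E : mat) (kap : nat -> mat) (kap2 : nat -> nat -> mat)
    (c d : list nat) : mat :=
  let ct := last c 0%nat in
  let d1 := hd 0%nat d in
  mmul b (mmul b (Lpart b E kap (removelast c))
                 (madd (kap2 ct d1) (mmul b (mmul b (kap ct) E) (mtr (kap d1)))))
         (Rpart b E kap (tl d)).

Definition are_motif_cumulants (N b : nat) (blk : nat -> nat) (W : mat)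
    (kap : nat -> mat) (kap2 : nat -> nat -> mat) : Prop :=
  let E := Emat N blk in
  (forall n p q, (1 <= n)%nat -> (p < b)%nat -> (q < b)%nat ->
     mu N blk W n 0 p q = msumL (map (chainK b E kap) (comps n)) p q) /\
  (forall n m p q, (1 <= n)%nat -> (1 <= m)%nat -> (p < b)%nat -> (q < b)%nat ->
     mu N blk W n m p q =
     msumL (flat_map (fun c => map (fun d => mixterm b E kap kap2 c d) (comps m))
                     (comps n)) p q).

Definition is_submult_norm (b : nat) (nrm : mat -> R) : Prop :=
  (forall A B, (forall i j, (i < b)%nat -> (j < b)%nat -> A i j = B i j) ->
     nrm A = nrm B) /\
  (forall A, 0 <= nrm A) /\
  (forall A, nrm A = 0 -> forall i j, (i < b)%nat -> (j < b)%nat -> A i j = 0) /\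
  (forall c A, nrm (mscale c A) = Rabs c * nrm A) /\
  (forall A B, nrm (madd A B) <= nrm A + nrm B) /\
  (forall A B, nrm (mmul b A B) <= nrm A * nrm B).

Definition mseries (b : nat) (f : nat -> mat) (L : mat) : Prop :=
  forall i j, (i < b)%nat -> (j < b)%nat ->
    Un_cv (fun K => rsum K (fun n => f (S n) i j)) (L i j).
Definition mseries2 (b : nat) (f : nat -> nat -> mat) (L : mat) : Prop :=
  forall i j, (i < b)%nat -> (j < b)%nat ->
    Un_cv (fun K => rsum K (fun n => rsum K (fun m => f (S n) (S m) i j))) (L i j).

(* Main.v *)
Require Import Defs.
From Stdlib Require Import Reals List Arith Lia Lra FunctionalExtensionality.
Import ListNotations.
Open Scope R_scope.


Lemma rsum_ext n f g : (forall k, (k < n)%nat -> f k = g k) -> rsum n f = rsum n g.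
Proof. induction n; simpl; intros H; auto. rewrite IHn by (intros; apply H; lia). rewrite H by lia. auto. Qed.

Lemma rsum_plus n f g : rsum n (fun k => f k + g k) = rsum n f + rsum n g.
Proof. induction n; simpl; [lra|]. rewrite IHn. lra. Qed.

Lemma rsum_minus n f g : rsum n (fun k => f k - g k) = rsum n f - rsum n g.
Proof. induction n; simpl; [lra|]. rewrite IHn. lra. Qed.

Lemma rsum_scal_l n c f : rsum n (fun k => c * f k) = c * rsum n f.
Proof. induction n; simpl; [lra|]. rewrite IHn. lra. Qed.

Lemma rsum_scal_r n c f : rsum n (fun k => f k * c) = rsum n f * c.
Proof. induction n; simpl; [lra|]. rewrite IHn. lra. Qed.

Lemma rsum_zero n : rsum n (fun _ => 0) = 0.
Proof. induction n; simpl; [lra|]. rewrite IHn. lra. Qed.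

Lemma rsum_zero' n f : (forall k, (k < n)%nat -> f k = 0) -> rsum n f = 0.
Proof. intros H. rewrite (rsum_ext n f (fun _ => 0)) by auto. apply rsum_zero. Qed.

Lemma rsum_swap n m (f : nat -> nat -> R) :
  rsum n (fun i => rsum m (fun j => f i j)) = rsum m (fun j => rsum n (fun i => f i j)).
Proof.
induction n; simpl. { rewrite rsum_zero. auto. }
rewrite IHn. rewrite <- rsum_plus. auto.
Qed.

Lemma rsum_le n f g : (forall k, (k < n)%nat -> f k <= g k) -> rsum n f <= rsum n g.
Proof. induction n; simpl; intros H; [lra|]. assert (f n <= g n) by (apply H; lia).
assert (rsum n f <= rsum n g) by (apply IHn; intros; apply H; lia). lra. Qed.

Lemma rsum_nonneg n f : (forall k, (k < n)%nat -> 0 <= f k) -> 0 <= rsum n f.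
Proof. intros H. rewrite <- (rsum_zero n). apply rsum_le. auto. Qed.

Lemma rsum_abs n f : Rabs (rsum n f) <= rsum n (fun k => Rabs (f k)).
Proof. induction n; simpl. { rewrite Rabs_R0. lra. }
eapply Rle_trans. apply Rabs_triang. lra. Qed.

Lemma rsum_split n m f : rsum (n + m) f = rsum n f + rsum m (fun k => f (n + k)%nat).
Proof. induction m; simpl. { rewrite Nat.add_0_r. lra. }
rewrite Nat.add_succ_r. simpl. rewrite IHm. lra. Qed.

Lemma rsum_mono n m f : (forall k, 0 <= f k) -> (n <= m)%nat -> rsum n f <= rsum m f.
Proof. intros H Hnm. replace m with (n + (m - n))%nat by lia. rewrite rsum_split.
assert (0 <= rsum (m - n) (fun k => f (n + k)%nat)) by (apply rsum_nonneg; auto). lra. Qed.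

Lemma rsum_S_l n f : rsum (S n) f = f 0%nat + rsum n (fun k => f (S k)).
Proof. replace (S n) with (1 + n)%nat by lia. rewrite rsum_split. simpl. lra. Qed.

Lemma rsum_delta n t h : (t < n)%nat -> rsum n (fun k => if Nat.eqb k t then h k else 0) = h t.
Proof. induction n; intros Ht; [lia|]. simpl.
destruct (Nat.eq_dec t n) as [->|Hne].
- rewrite Nat.eqb_refl. rewrite rsum_zero'. lra. intros k Hk. destruct (Nat.eqb_spec k n); [lia|auto].
- rewrite IHn by lia. destruct (Nat.eqb_spec n t); [lia|]. lra. Qed.

Lemma rsum_delta0 n t h : (n <= t)%nat -> rsum n (fun k => if Nat.eqb k t then h k else 0) = 0.
Proof. intros. apply rsum_zero'. intros k Hk. destruct (Nat.eqb_spec k t); [lia|auto]. Qed.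

Lemma rsum_rev n f : rsum n (fun k => f (n - 1 - k)%nat) = rsum n f.
Proof. induction n. auto. rewrite rsum_S_l. simpl rsum at 2. rewrite <- IHn.
replace (S n - 1 - 0)%nat with n by lia. rewrite Rplus_comm. f_equal. apply rsum_ext. intros. f_equal. lia. Qed.

Definition ind (b : bool) : R := if b then 1 else 0.

Lemma rsum_ind_lt n h f : (h <= n)%nat -> rsum n (fun k => ind (Nat.ltb k h) * f k) = rsum h f.
Proof. intros H. replace n with (h + (n - h))%nat by lia. rewrite rsum_split.
rewrite (rsum_ext h _ f). rewrite (rsum_zero' (n - h)). lra.
- intros k _. unfold ind. destruct (Nat.ltb_spec (h + k) h); [lia|]. lra.
- intros k Hk. unfold ind. destruct (Nat.ltb_spec k h); [|lia]. lra. Qed.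

Lemma rsum_tri K (F : nat -> nat -> R) :
  rsum K (fun n => rsum (S n) (fun i => F (n - i)%nat i)) =
  rsum K (fun p => rsum K (fun i => ind (Nat.ltb (p + i) K) * F p i)).
Proof.
assert (E : forall n, (n < K)%nat -> rsum (S n) (fun i => F (n - i)%nat i) =
   rsum K (fun p => rsum K (fun i => if Nat.eqb (p + i) n then F p i else 0))).
{ intros n Hn. rewrite rsum_swap.
  rewrite <- (rsum_ind_lt K (S n)) by lia. apply rsum_ext. intros i Hi.
  unfold ind. destruct (Nat.ltb_spec i (S n)).
  - rewrite Rmult_1_l. rewrite (rsum_ext K _ (fun p => if Nat.eqb p (n - i) then F p i else 0)).
    rewrite rsum_delta by lia. auto.
    intros p Hp. destruct (Nat.eqb_spec (p + i) n); destruct (Nat.eqb_spec p (n - i)); auto; lia.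
  - rewrite Rmult_0_l. rewrite rsum_zero'. auto. intros p Hp. destruct (Nat.eqb_spec (p + i) n); auto; lia. }
rewrite (rsum_ext K _ _ E).
rewrite rsum_swap. apply rsum_ext. intros p Hp. rewrite rsum_swap. apply rsum_ext. intros i Hi.
rewrite (rsum_ext K _ (fun n => if Nat.eqb n (p + i) then F p i else 0)).
2:{ intros n Hn. destruct (Nat.eqb_spec (p+i) n); destruct (Nat.eqb_spec n (p+i)); auto; lia. }
unfold ind. destruct (Nat.ltb_spec (p + i) K).
- rewrite rsum_delta by auto. lra.
- rewrite rsum_delta0 by auto. lra.
Qed.

Lemma cv_ext (u v : nat -> R) l : (forall K, u K = v K) -> Un_cv u l -> Un_cv v l.
Proof. intros E H e He. destruct (H e He) as [N HN]. exists N. intros. rewrite <- E. auto. Qed.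

Lemma cv_const c : Un_cv (fun _ => c) c.
Proof. intros e He. exists 0%nat. intros. unfold R_dist. rewrite Rminus_eq_0, Rabs_R0. auto. Qed.

Lemma cv_scal c u l : Un_cv u l -> Un_cv (fun K => c * u K) (c * l).
Proof. intros H. apply CV_mult; auto. apply cv_const. Qed.

Lemma cv_rsum n (u : nat -> nat -> R) (l : nat -> R) :
  (forall k, (k < n)%nat -> Un_cv (fun K => u K k) (l k)) ->
  Un_cv (fun K => rsum n (u K)) (rsum n l).
Proof. induction n; intros H; simpl. apply cv_const.
apply CV_plus. apply IHn; intros; apply H; lia. apply H; lia. Qed.

Lemma cv_shift u l : Un_cv u l -> Un_cv (fun K => u (S K)) l.
Proof. intros H e He. destruct (H e He) as [N HN]. exists N. intros. apply HN. lia. Qed.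

Lemma cv_unshift u l : Un_cv (fun K => u (S K)) l -> Un_cv u l.
Proof. intros H e He. destruct (H e He) as [N HN]. exists (S N). intros n Hn.
replace n with (S (n - 1)) by lia. apply HN. lia. Qed.

Lemma cv_half u l : Un_cv u l -> Un_cv (fun K => u (Nat.div2 K)) l.
Proof. intros H e He. destruct (H e He) as [N HN]. exists (2 * N)%nat. intros n Hn.
apply HN. pose proof (Nat.div2_odd n). destruct (Nat.odd n); simpl in *; lia. Qed.

Lemma cv_squeeze0 (x e : nat -> R) : (forall K, Rabs (x K) <= e K) -> Un_cv e 0 -> Un_cv x 0.
Proof. intros H He eps Heps. destruct (He eps Heps) as [N HN]. exists N. intros n Hn.
specialize (HN n Hn). specialize (H n). unfold R_dist in *. rewrite Rminus_0_r in *.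
pose proof (Rle_abs (e n)). lra. Qed.

Lemma cv_mono_bounded (u : nat -> R) B : (forall K, u K <= u (S K)) -> (forall K, u K <= B) ->
  exists l, Un_cv u l /\ (forall K, u K <= l).
Proof. intros Hg Hb. destruct (growing_cv u Hg) as [l Hl]. { exists B. intros x [i ->]. auto. }
exists l. split; auto. intros K. apply Rnot_lt_le. intros Hlt.
destruct (Hl (u K - l)) as [N HN]. lra.
assert (Hm : forall n, (K <= n)%nat -> u K <= u n).
{ intros n Hn. induction Hn. lra. specialize (Hg m). lra. }
specialize (HN (max N K) (Nat.le_max_l _ _)). specialize (Hm (max N K) (Nat.le_max_r _ _)).
unfold R_dist in HN. rewrite Rabs_right in HN by lra. lra. Qed.

Lemma cv_cauchy_dom (u v : nat -> R) lv :
  (forall K K', (K <= K')%nat -> Rabs (u K' - u K) <= v K' - v K) -> Un_cv v lv ->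
  exists l, Un_cv u l.
Proof. intros H Hv.
assert (Cv : Cauchy_crit v) by (apply CV_Cauchy; exists lv; auto).
assert (Cu : Cauchy_crit u).
{ intros e He. destruct (Cv e He) as [N HN]. exists N. intros n m Hn Hm. unfold R_dist in *.
  destruct (Nat.le_ge_cases n m) as [Hnm|Hnm].
  - specialize (H n m Hnm). specialize (HN m n Hm Hn). rewrite Rabs_minus_sym.
    pose proof (Rle_abs (v m - v n)). lra.
  - specialize (H m n Hnm). specialize (HN n m Hn Hm).
    pose proof (Rle_abs (v n - v m)). lra. }
destruct (R_complete u Cu) as [l Hl]. exists l. auto. Qed.

Lemma abs_sum_cv (a : nat -> R) B : (forall K, rsum K (fun k => Rabs (a k)) <= B) ->
  exists l, Un_cv (fun K => rsum K a) l.
Proof. intros HB.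
destruct (cv_mono_bounded (fun K => rsum K (fun k => Rabs (a k))) B) as [lv [Hlv _]]; auto.
{ intros K. simpl. pose proof (Rabs_pos (a K)). lra. }
apply (cv_cauchy_dom _ (fun K => rsum K (fun k => Rabs (a k))) lv); auto. intros K K' HK. replace K' with (K + (K' - K))%nat by lia.
rewrite !rsum_split. replace (rsum K a + rsum (K' - K) (fun k => a (K + k)%nat) - rsum K a)
  with (rsum (K' - K) (fun k => a (K + k)%nat)) by ring.
replace (rsum K (fun k => Rabs (a k)) + rsum (K' - K) (fun k => Rabs (a (K + k)%nat)) -
   rsum K (fun k => Rabs (a k))) with (rsum (K' - K) (fun k => Rabs (a (K + k)%nat))) by ring.
apply rsum_abs. Qed.

Lemma rsum_prod n m f g : rsum n f * rsum m g = rsum n (fun p => rsum m (fun i => f p * g i)).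
Proof. rewrite <- rsum_scal_r. apply rsum_ext. intros p _. rewrite <- rsum_scal_l. auto. Qed.

Lemma ind01 b : 0 <= ind b <= 1.
Proof. unfold ind. destruct b; lra. Qed.

Lemma Rabs_ind b : Rabs (ind b) = ind b.
Proof. unfold ind. destruct b. apply Rabs_R1. apply Rabs_R0. Qed.

Lemma cv_diff_half (u : nat -> R) l : Un_cv u l -> Un_cv (fun K => u K - u (Nat.div2 K)) 0.
Proof. intros H. pose proof (CV_minus _ _ _ _ H (cv_half _ _ H)) as H2.
replace 0 with (l - l) by ring. exact H2. Qed.

Lemma cv_from_diff (P T : nat -> R) l e :
  Un_cv P l -> (forall K, Rabs (P K - T K) <= e K) -> Un_cv e 0 -> Un_cv T l.
Proof. intros HP Hb He. pose proof (cv_squeeze0 _ _ Hb He) as H0.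
pose proof (CV_minus _ _ _ _ HP H0) as H1. rewrite Rminus_0_r in H1.
apply (cv_ext (fun i => P i - (P i - T i)) T l); [intros; ring | exact H1]. Qed.

Lemma half_le K : (Nat.div2 K <= K)%nat.
Proof. pose proof (Nat.div2_odd K). destruct (Nat.odd K); simpl in *; lia. Qed.

Lemma half_sum K p i : (p < Nat.div2 K)%nat -> (i < Nat.div2 K)%nat -> (p + i < K)%nat.
Proof. pose proof (Nat.div2_odd K). destruct (Nat.odd K); simpl in *; lia. Qed.

Lemma cauchy1 (a c : nat -> R) Ba Bc A Cc :
  (forall K, rsum K (fun k => Rabs (a k)) <= Ba) -> (forall K, rsum K (fun k => Rabs (c k)) <= Bc) ->
  Un_cv (fun K => rsum K a) A -> Un_cv (fun K => rsum K c) Cc ->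
  Un_cv (fun K => rsum K (fun n => rsum (S n) (fun i => a (n - i)%nat * c i))) (A * Cc).
Proof.
intros Ha Hc HA HC.
destruct (cv_mono_bounded (fun K => rsum K (fun k => Rabs (a k))) Ba) as [la [Hla _]]; auto.
{ intros K. simpl. pose proof (Rabs_pos (a K)). lra. }
destruct (cv_mono_bounded (fun K => rsum K (fun k => Rabs (c k))) Bc) as [lc [Hlc _]]; auto.
{ intros K. simpl. pose proof (Rabs_pos (c K)). lra. }
pose (w := fun K => rsum K (fun k => Rabs (a k)) * rsum K (fun k => Rabs (c k))).
assert (Hw : Un_cv w (la * lc)) by (apply CV_mult; auto).
apply (cv_from_diff (fun K => rsum K a * rsum K c) _ _ (fun K => w K - w (Nat.div2 K))).
- apply CV_mult; auto.
- intros K. rewrite (rsum_tri K (fun p i => a p * c i)). rewrite rsum_prod. unfold w. rewrite !rsum_prod.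
  set (h := Nat.div2 K).
  rewrite <- (rsum_ind_lt K h (fun p => rsum h (fun i => Rabs (a p) * Rabs (c i)))) by apply half_le.
  rewrite <- rsum_minus, <- rsum_minus.
  eapply Rle_trans. apply rsum_abs. apply rsum_le. intros p Hp.
  rewrite <- (rsum_ind_lt K h (fun i => Rabs (a p) * Rabs (c i))) by apply half_le.
  rewrite <- rsum_scal_l, <- rsum_minus, <- rsum_minus.
  eapply Rle_trans. apply rsum_abs. apply rsum_le. intros i Hi.
  pose proof (Rabs_pos (a p)). pose proof (Rabs_pos (c i)).
  rewrite <- Rabs_mult.
  unfold ind. destruct (Nat.ltb_spec (p + i) K); destruct (Nat.ltb_spec p h); destruct (Nat.ltb_spec i h);
    try (pose proof (half_sum K p i); lia);
    rewrite ?Rmult_1_l, ?Rmult_0_l, ?Rminus_0_r; try (rewrite Rminus_eq_0; rewrite Rabs_R0; lra);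
    try lra.
  all: try (rewrite Rabs_mult; lra).
  all: rewrite Rminus_eq_0, Rabs_R0; pose proof (Rabs_pos (a p * c i)); try lra.
- apply (cv_diff_half w (la * lc)). exact Hw.
Qed.

Definition S4 K (f : nat -> nat -> nat -> nat -> R) :=
  rsum K (fun p => rsum K (fun i => rsum K (fun q => rsum K (fun j => f p i q j)))).

Lemma S4_ext K f g : (forall p i q j, (p < K)%nat -> (i < K)%nat -> (q < K)%nat -> (j < K)%nat ->
  f p i q j = g p i q j) -> S4 K f = S4 K g.
Proof. intros H. unfold S4. apply rsum_ext; intros. apply rsum_ext; intros.
apply rsum_ext; intros. apply rsum_ext; intros. auto. Qed.

Lemma S4_le K f g : (forall p i q j, (p < K)%nat -> (i < K)%nat -> (q < K)%nat -> (j < K)%nat ->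
  f p i q j <= g p i q j) -> S4 K f <= S4 K g.
Proof. intros H. unfold S4. apply rsum_le; intros. apply rsum_le; intros.
apply rsum_le; intros. apply rsum_le; intros. auto. Qed.

Lemma S4_abs K f : Rabs (S4 K f) <= S4 K (fun p i q j => Rabs (f p i q j)).
Proof. unfold S4. eapply Rle_trans. apply rsum_abs. apply rsum_le; intros.
eapply Rle_trans. apply rsum_abs. apply rsum_le; intros.
eapply Rle_trans. apply rsum_abs. apply rsum_le; intros. apply rsum_abs. Qed.

Lemma S4_minus K f g : S4 K (fun p i q j => f p i q j - g p i q j) = S4 K f - S4 K g.
Proof. unfold S4. rewrite <- rsum_minus. apply rsum_ext; intros.
rewrite <- rsum_minus. apply rsum_ext; intros. rewrite <- rsum_minus. apply rsum_ext; intros.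
apply rsum_minus. Qed.

Lemma S4_prod K f g h : rsum K f * rsum K (fun i => rsum K (fun j => g i j)) * rsum K h =
  S4 K (fun p i q j => f p * g i j * h q).
Proof. unfold S4.
rewrite (rsum_ext K (fun p => rsum K (fun i => rsum K (fun q => rsum K (fun j => f p * g i j * h q))))
  (fun p => rsum K (fun i => f p * rsum K (fun j => g i j) * rsum K h))).
- rewrite <- (rsum_scal_r K (rsum K (fun i => rsum K (fun j => g i j))) f).
  rewrite <- (rsum_scal_r K (rsum K h)). apply rsum_ext; intros p _.
  rewrite <- (rsum_scal_l K (f p)). rewrite <- (rsum_scal_r K (rsum K h)). auto.
- intros p _. apply rsum_ext; intros i _.
  rewrite (rsum_ext K _ (fun q => (f p * h q) * rsum K (fun j => g i j))).
  + rewrite rsum_scal_r. rewrite rsum_scal_l. ring.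
  + intros q _. rewrite <- rsum_scal_l. apply rsum_ext; intros. ring.
Qed.

Lemma pull2 K c (F : nat -> nat -> R) :
  rsum K (fun i => rsum K (fun j => c * F i j)) = c * rsum K (fun i => rsum K (fun j => F i j)).
Proof. rewrite <- rsum_scal_l. apply rsum_ext; intros. apply rsum_scal_l. Qed.
Lemma pull3 K c (F : nat -> nat -> nat -> R) :
  rsum K (fun i => rsum K (fun q => rsum K (fun j => c * F i q j))) =
  c * rsum K (fun i => rsum K (fun q => rsum K (fun j => F i q j))).
Proof. rewrite <- rsum_scal_l. apply rsum_ext; intros. apply pull2. Qed.

Lemma S4_ind K h X : (h <= K)%nat ->
  S4 K (fun p i q j => ind (Nat.ltb p h) * (ind (Nat.ltb i h) * (ind (Nat.ltb q h) * (ind (Nat.ltb j h) * X p i q j)))) = S4 h X.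
Proof. intros Hh. unfold S4.
rewrite <- (rsum_ind_lt K h) by auto. apply rsum_ext; intros p _. rewrite pull3. f_equal.
rewrite <- (rsum_ind_lt K h) by auto. apply rsum_ext; intros i _. rewrite pull2. f_equal.
rewrite <- (rsum_ind_lt K h) by auto. apply rsum_ext; intros q _. rewrite rsum_scal_l. f_equal.
rewrite <- (rsum_ind_lt K h) by auto. apply rsum_ext; auto. Qed.

Lemma box_mono f K K' : (forall i j, 0 <= f i j) -> (K <= K')%nat ->
  rsum K (fun i => rsum K (fun j => f i j)) <= rsum K' (fun i => rsum K' (fun j => f i j)).
Proof. intros Hf HK. apply Rle_trans with (rsum K (fun i => rsum K' (fun j => f i j))).
- apply rsum_le; intros. apply rsum_mono; auto.
- apply rsum_mono; auto. intros. apply rsum_nonneg; auto. Qed.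

Lemma cauchy2 (a c : nat -> R) (z : nat -> nat -> R) Ba Bc Bz A Cc Z :
  (forall K, rsum K (fun k => Rabs (a k)) <= Ba) -> (forall K, rsum K (fun k => Rabs (c k)) <= Bc) ->
  (forall K, rsum K (fun i => rsum K (fun j => Rabs (z i j))) <= Bz) ->
  Un_cv (fun K => rsum K a) A -> Un_cv (fun K => rsum K c) Cc ->
  Un_cv (fun K => rsum K (fun i => rsum K (fun j => z i j))) Z ->
  Un_cv (fun K => rsum K (fun n => rsum K (fun m => rsum (S n) (fun i => rsum (S m) (fun j =>
      a (n - i)%nat * z i j * c (m - j)%nat))))) (A * Z * Cc).
Proof.
intros Ha Hc Hz HA HC HZ.
destruct (cv_mono_bounded (fun K => rsum K (fun k => Rabs (a k))) Ba) as [la [Hla _]]; auto.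
{ intros K. simpl. pose proof (Rabs_pos (a K)). lra. }
destruct (cv_mono_bounded (fun K => rsum K (fun k => Rabs (c k))) Bc) as [lc [Hlc _]]; auto.
{ intros K. simpl. pose proof (Rabs_pos (c K)). lra. }
destruct (cv_mono_bounded (fun K => rsum K (fun i => rsum K (fun j => Rabs (z i j)))) Bz) as [lz [Hlz _]]; auto.
{ intros K. apply box_mono. intros; apply Rabs_pos. lia. }
pose (w := fun K => rsum K (fun k => Rabs (a k)) * rsum K (fun i => rsum K (fun j => Rabs (z i j)))
   * rsum K (fun k => Rabs (c k))).
assert (Hw : Un_cv w (la * lz * lc)) by (apply CV_mult; auto; apply CV_mult; auto).
apply (cv_from_diff (fun K => rsum K a * rsum K (fun i => rsum K (fun j => z i j)) * rsum K c) _ _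
   (fun K => w K - w (Nat.div2 K))).
- apply CV_mult; auto. apply CV_mult; auto.
- intros K.
  assert (ET : rsum K (fun n => rsum K (fun m => rsum (S n) (fun i => rsum (S m) (fun j =>
      a (n - i)%nat * z i j * c (m - j)%nat)))) =
      S4 K (fun p i q j => ind (Nat.ltb (p + i) K) * (ind (Nat.ltb (q + j) K) * (a p * z i j * c q)))).
  { rewrite (rsum_ext K _ (fun n => rsum (S n) (fun i => rsum K (fun m => rsum (S m) (fun j =>
      a (n - i)%nat * z i j * c (m - j)%nat))))) by (intros; apply rsum_swap).
    rewrite (rsum_tri K (fun p i => rsum K (fun m => rsum (S m) (fun j => a p * z i j * c (m - j)%nat)))).
    unfold S4. apply rsum_ext; intros p _. apply rsum_ext; intros i _.
    rewrite (rsum_tri K (fun q j => a p * z i j * c q)). rewrite <- rsum_scal_l.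
    apply rsum_ext; intros q _. rewrite <- rsum_scal_l. auto. }
  rewrite ET, S4_prod. unfold w. rewrite !S4_prod.
  set (h := Nat.div2 K).
  rewrite <- (S4_ind K h) by apply half_le.
  rewrite <- !S4_minus.
  eapply Rle_trans. apply S4_abs. apply S4_le. intros p i q j Hp Hi Hq Hj.
  pose proof (Rabs_pos (a p)). pose proof (Rabs_pos (c q)). pose proof (Rabs_pos (z i j)).
  replace (a p * z i j * c q - ind (Nat.ltb (p + i) K) * (ind (Nat.ltb (q + j) K) * (a p * z i j * c q)))
    with ((1 - ind (Nat.ltb (p + i) K) * ind (Nat.ltb (q + j) K)) * (a p * z i j * c q)) by ring.
  replace (Rabs (a p) * Rabs (z i j) * Rabs (c q) - ind (Nat.ltb p h) * (ind (Nat.ltb i h) * (ind (Nat.ltb q h) *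
     (ind (Nat.ltb j h) * (Rabs (a p) * Rabs (z i j) * Rabs (c q))))))
    with ((1 - ind (Nat.ltb p h) * ind (Nat.ltb i h) * ind (Nat.ltb q h) * ind (Nat.ltb j h)) *
          (Rabs (a p) * Rabs (z i j) * Rabs (c q))) by ring.
  rewrite Rabs_mult, !Rabs_mult.
  assert (0 <= Rabs (a p) * Rabs (z i j) * Rabs (c q)) by (apply Rmult_le_pos; [apply Rmult_le_pos|]; auto).
  unfold ind. destruct (Nat.ltb_spec (p + i) K); destruct (Nat.ltb_spec (q + j) K);
   destruct (Nat.ltb_spec p h); destruct (Nat.ltb_spec i h); destruct (Nat.ltb_spec q h); destruct (Nat.ltb_spec j h);
   try (pose proof (half_sum K p i); pose proof (half_sum K q j); lia);
   repeat rewrite ?Rmult_1_l, ?Rmult_0_l, ?Rmult_1_r, ?Rmult_0_r, ?Rminus_0_r, ?Rminus_eq_0, ?Rabs_R0, ?Rabs_R1;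
   try lra.
- apply (cv_diff_half w (la * lz * lc)). exact Hw.
Qed.

From Stdlib Require Import Setoid Morphisms IndefiniteDescription.
#[global] Instance rsum_proper : Proper (eq ==> pointwise_relation nat eq ==> eq) rsum.
Proof. intros n n' <- f g H. apply rsum_ext. intros; apply H. Qed.
#[global] Instance Un_cv_proper : Proper (pointwise_relation nat eq ==> eq ==> iff) Un_cv.
Proof. intros u v H l l' <-. split; apply cv_ext; intros; [|symmetry]; apply H. Qed.

Definition meq n (A B : mat) := forall i j, (i < n)%nat -> (j < n)%nat -> A i j = B i j.
Definition msum K (F : nat -> mat) : mat := fun i j => rsum K (fun k => F k i j).
Definition mcv n (u : nat -> mat) (L : mat) :=
  forall i j, (i < n)%nat -> (j < n)%nat -> Un_cv (fun K => u K i j) (L i j).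

Lemma meq_refl n A : meq n A A. Proof. intros i j _ _. auto. Qed.
Lemma meq_sym n A B : meq n A B -> meq n B A. Proof. intros H i j Hi Hj. symmetry. auto. Qed.
Lemma meq_trans n A B C : meq n A B -> meq n B C -> meq n A C.
Proof. intros H1 H2 i j Hi Hj. rewrite H1, H2; auto. Qed.

Lemma mmul_assoc n A B C : mmul n (mmul n A B) C = mmul n A (mmul n B C).
Proof. extensionality i; extensionality j. unfold mmul.
setoid_rewrite <- rsum_scal_r. setoid_rewrite <- rsum_scal_l. rewrite rsum_swap.
apply rsum_ext; intros; apply rsum_ext; intros. ring. Qed.

Lemma mmul_madd_l n A B C : mmul n (madd A B) C = madd (mmul n A C) (mmul n B C).
Proof. extensionality i; extensionality j. unfold mmul, madd. rewrite <- rsum_plus.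
apply rsum_ext; intros. ring. Qed.
Lemma mmul_madd_r n A B C : mmul n A (madd B C) = madd (mmul n A B) (mmul n A C).
Proof. extensionality i; extensionality j. unfold mmul, madd. rewrite <- rsum_plus.
apply rsum_ext; intros. ring. Qed.
Lemma mmul_mscale_l n c A B : mmul n (mscale c A) B = mscale c (mmul n A B).
Proof. extensionality i; extensionality j. unfold mmul, mscale. rewrite <- rsum_scal_l.
apply rsum_ext; intros. ring. Qed.
Lemma mmul_mscale_r n c A B : mmul n A (mscale c B) = mscale c (mmul n A B).
Proof. extensionality i; extensionality j. unfold mmul, mscale. rewrite <- rsum_scal_l.
apply rsum_ext; intros. ring. Qed.
Lemma mmul_msum_l n K F B : mmul n (msum K F) B = msum K (fun k => mmul n (F k) B).
Proof. extensionality i; extensionality j. unfold mmul, msum.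
setoid_rewrite <- rsum_scal_r. apply rsum_swap. Qed.
Lemma mmul_msum_r n K A F : mmul n A (msum K F) = msum K (fun k => mmul n A (F k)).
Proof. extensionality i; extensionality j. unfold mmul, msum.
setoid_rewrite <- rsum_scal_l. apply rsum_swap. Qed.
Lemma mtr_mmul n A B : mtr (mmul n A B) = mmul n (mtr B) (mtr A).
Proof. extensionality i; extensionality j. unfold mtr, mmul. apply rsum_ext; intros; ring. Qed.
Lemma mtr_msum K F : mtr (msum K F) = msum K (fun k => mtr (F k)).
Proof. reflexivity. Qed.
Lemma mtr_mtr A : mtr (mtr A) = A. Proof. reflexivity. Qed.
Lemma mtr_mid : mtr mid = mid.
Proof. extensionality i; extensionality j. unfold mtr, mid. rewrite Nat.eqb_sym. auto. Qed.
Lemma msum_madd K F G : msum K (fun k => madd (F k) (G k)) = madd (msum K F) (msum K G).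
Proof. extensionality i; extensionality j. unfold msum, madd. apply rsum_plus. Qed.
Lemma msum_mscale K c F : msum K (fun k => mscale c (F k)) = mscale c (msum K F).
Proof. extensionality i; extensionality j. unfold msum, mscale. apply rsum_scal_l. Qed.
Lemma msum_S K F : msum (S K) F = madd (msum K F) (F K).
Proof. reflexivity. Qed.

Lemma mmul_mid_l n A i j : (i < n)%nat -> mmul n mid A i j = A i j.
Proof. intros Hi. unfold mmul, mid.
rewrite (rsum_ext n _ (fun k => if Nat.eqb k i then A k j else 0)). apply (rsum_delta n i (fun k => A k j)); auto.
intros k _. rewrite Nat.eqb_sym. destruct (Nat.eqb_spec k i); subst; ring. Qed.
Lemma mmul_mid_r n A i j : (j < n)%nat -> mmul n A mid i j = A i j.
Proof. intros Hj. unfold mmul, mid.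
rewrite (rsum_ext n _ (fun k => if Nat.eqb k j then A i k else 0)). apply (rsum_delta n j (fun k => A i k)); auto.
intros k _. destruct (Nat.eqb_spec k j); subst; ring. Qed.

Lemma mmul_meq n A A' B B' : meq n A A' -> meq n B B' -> meq n (mmul n A B) (mmul n A' B').
Proof. intros H1 H2 i j Hi Hj. unfold mmul. apply rsum_ext; intros. rewrite H1, H2; auto. Qed.
Lemma madd_meq n A A' B B' : meq n A A' -> meq n B B' -> meq n (madd A B) (madd A' B').
Proof. intros H1 H2 i j Hi Hj. unfold madd. rewrite H1, H2; auto. Qed.
Lemma mscale_meq n c A A' : meq n A A' -> meq n (mscale c A) (mscale c A').
Proof. intros H1 i j Hi Hj. unfold mscale. rewrite H1; auto. Qed.
Lemma mtr_meq n A A' : meq n A A' -> meq n (mtr A) (mtr A').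
Proof. intros H1 i j Hi Hj. unfold mtr. rewrite H1; auto. Qed.
Lemma msum_meq n K F G : (forall k, (k < K)%nat -> meq n (F k) (G k)) -> meq n (msum K F) (msum K G).
Proof. intros H i j Hi Hj. unfold msum. apply rsum_ext; intros. apply H; auto. Qed.
Lemma mmul_mid_l' n A : meq n (mmul n mid A) A.
Proof. intros i j Hi Hj. apply mmul_mid_l; auto. Qed.
Lemma mmul_mid_r' n A : meq n (mmul n A mid) A.
Proof. intros i j Hi Hj. apply mmul_mid_r; auto. Qed.

Lemma mcv_ext n u v L : (forall K, meq n (u K) (v K)) -> mcv n u L -> mcv n v L.
Proof. intros E H i j Hi Hj. apply (cv_ext (fun K => u K i j)); auto. intros; apply E; auto. Qed.
Lemma mcv_lim n u L L' : meq n L L' -> mcv n u L -> mcv n u L'.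
Proof. intros E H i j Hi Hj. rewrite <- E; auto. Qed.
Lemma mcv_unique n u L L' : mcv n u L -> mcv n u L' -> meq n L L'.
Proof. intros H1 H2 i j Hi Hj. eapply UL_sequence; eauto. Qed.
Lemma mcv_const n A : mcv n (fun _ => A) A.
Proof. intros i j _ _. apply cv_const. Qed.
Lemma mcv_madd n u v A B : mcv n u A -> mcv n v B -> mcv n (fun K => madd (u K) (v K)) (madd A B).
Proof. intros H1 H2 i j Hi Hj. apply CV_plus; auto. Qed.
Lemma mcv_mscale n c u A : mcv n u A -> mcv n (fun K => mscale c (u K)) (mscale c A).
Proof. intros H1 i j Hi Hj. apply cv_scal; auto. Qed.
Lemma mcv_mtr n u A : mcv n u A -> mcv n (fun K => mtr (u K)) (mtr A).
Proof. intros H1 i j Hi Hj. apply H1; auto. Qed.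
Lemma mcv_mmul n u v A B : mcv n u A -> mcv n v B -> mcv n (fun K => mmul n (u K) (v K)) (mmul n A B).
Proof. intros H1 H2 i j Hi Hj. unfold mmul. apply cv_rsum. intros k Hk. apply CV_mult; auto. Qed.
Lemma mcv_shift n u A : mcv n u A -> mcv n (fun K => u (S K)) A.
Proof. intros H i j Hi Hj. apply (cv_shift (fun K => u K i j)); auto. Qed.
Lemma mcv_unshift n u A : mcv n (fun K => u (S K)) A -> mcv n u A.
Proof. intros H i j Hi Hj. apply (cv_unshift (fun K => u K i j)); auto. Qed.

Definition mabs1 n (a : nat -> mat) := forall i j, (i < n)%nat -> (j < n)%nat ->
  exists B, forall K, rsum K (fun k => Rabs (a k i j)) <= B.
Definition mabs2 n (z : nat -> nat -> mat) := forall i j, (i < n)%nat -> (j < n)%nat ->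
  exists B, forall K, rsum K (fun k => rsum K (fun l => Rabs (z k l i j))) <= B.

Lemma ex_fun2 (P : nat -> nat -> R -> Prop) : (forall i j, exists l, P i j l) ->
  exists f : mat, forall i j, P i j (f i j).
Proof. intros H. exists (fun i j => proj1_sig (constructive_indefinite_description _ (H i j))).
intros i j. exact (proj2_sig (constructive_indefinite_description _ (H i j))). Qed.

Lemma mabs1_cv n a : mabs1 n a -> exists L, mcv n (fun K => msum K a) L.
Proof. intros H.
destruct (ex_fun2 (fun i j l => (i < n)%nat -> (j < n)%nat -> Un_cv (fun K => rsum K (fun k => a k i j)) l))
  as [f Hf].
{ intros i j. destruct (lt_dec i n); [destruct (lt_dec j n)|].
  - destruct (H i j) as [B HB]; auto. destruct (abs_sum_cv _ B HB) as [lim Hl]. exists lim; auto.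
  - exists 0. intros; lia.
  - exists 0. intros; lia. }
exists f. intros i j Hi Hj. apply Hf; auto.
Qed.

Definition box K (f : nat -> nat -> R) := rsum K (fun i => rsum K (fun j => f i j)).

Lemma box_ind K K' f : (K <= K')%nat ->
  box K f = rsum K' (fun i => rsum K' (fun j => ind (Nat.ltb i K) * (ind (Nat.ltb j K) * f i j))).
Proof. intros H. unfold box. rewrite <- (rsum_ind_lt K' K) by auto. apply rsum_ext; intros i _.
rewrite rsum_scal_l. f_equal. rewrite <- (rsum_ind_lt K' K) by auto. auto. Qed.

Lemma box_diff K K' f : (K <= K')%nat ->
  Rabs (box K' f - box K f) <= box K' (fun i j => Rabs (f i j)) - box K (fun i j => Rabs (f i j)).
Proof. intros H. rewrite !(box_ind K K') by auto. unfold box.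
rewrite <- !rsum_minus. eapply Rle_trans. apply rsum_abs. apply rsum_le; intros i _.
rewrite <- !rsum_minus. eapply Rle_trans. apply rsum_abs. apply rsum_le; intros j _.
pose proof (Rabs_pos (f i j)).
unfold ind. destruct (Nat.ltb i K); destruct (Nat.ltb j K);
 rewrite ?Rmult_1_l, ?Rmult_0_l, ?Rminus_0_r, ?Rminus_eq_0, ?Rabs_R0; lra. Qed.

Lemma box2_cv (z : nat -> nat -> R) B : (forall K, box K (fun i j => Rabs (z i j)) <= B) ->
  exists l, Un_cv (fun K => box K z) l.
Proof. intros HB.
destruct (cv_mono_bounded (fun K => box K (fun i j => Rabs (z i j))) B) as [lv [Hlv _]]; auto.
{ intros K. apply box_mono. intros; apply Rabs_pos. lia. }
apply (cv_cauchy_dom _ (fun K => box K (fun i j => Rabs (z i j))) lv); auto.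
intros K K' HK. apply box_diff; auto. Qed.

Lemma mabs2_cv n z : mabs2 n z -> exists L, mcv n (fun K => msum K (fun k => msum K (fun l => z k l))) L.
Proof. intros H.
destruct (ex_fun2 (fun i j l => (i < n)%nat -> (j < n)%nat ->
   Un_cv (fun K => box K (fun k l => z k l i j)) l)) as [f Hf].
{ intros i j. destruct (lt_dec i n); [destruct (lt_dec j n)|].
  - destruct (H i j) as [B HB]; auto. destruct (box2_cv (fun k l => z k l i j) B HB) as [lim Hl].
    exists lim; auto.
  - exists 0. intros; lia.
  - exists 0. intros; lia. }
exists f. intros i j Hi Hj. apply Hf; auto.
Qed.

Lemma pull2out M n (G : nat -> nat -> nat -> R) :
  rsum M (fun x => rsum n (fun k1 => rsum n (fun k2 => G x k1 k2))) =
  rsum n (fun k1 => rsum n (fun k2 => rsum M (fun x => G x k1 k2))).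
Proof. rewrite rsum_swap. apply rsum_ext; intros. apply rsum_swap. Qed.

Lemma mcauchy1 n (a c : nat -> mat) A Cc :
  mabs1 n a -> mabs1 n c -> mcv n (fun K => msum K a) A -> mcv n (fun K => msum K c) Cc ->
  mcv n (fun K => msum K (fun m => msum (S m) (fun i => mmul n (a (m - i)%nat) (c i)))) (mmul n A Cc).
Proof. intros Ha Hc HA HC p q Hp Hq. unfold msum, mmul.
apply (cv_ext (fun K => rsum n (fun k => rsum K (fun m => rsum (S m) (fun i => a (m - i)%nat p k * c i k q))))).
{ intros K. rewrite rsum_swap. apply rsum_ext; intros. apply rsum_swap. }
apply cv_rsum. intros k Hk.
destruct (Ha p k) as [Ba HBa]; auto. destruct (Hc k q) as [Bc HBc]; auto.
apply (cauchy1 (fun t => a t p k) (fun t => c t k q) Ba Bc); auto.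
- apply HA; auto.
- apply HC; auto.
Qed.

Lemma mcauchy2 n (a c : nat -> mat) (z : nat -> nat -> mat) A Z Cc :
  mabs1 n a -> mabs1 n c -> mabs2 n z ->
  mcv n (fun K => msum K a) A -> mcv n (fun K => msum K c) Cc ->
  mcv n (fun K => msum K (fun k => msum K (fun l => z k l))) Z ->
  mcv n (fun K => msum K (fun n1 => msum K (fun m => msum (S n1) (fun i => msum (S m) (fun j =>
      mmul n (mmul n (a (n1 - i)%nat) (z i j)) (c (m - j)%nat))))))
    (mmul n (mmul n A Z) Cc).
Proof. intros Ha Hc Hz HA HC HZ p q Hp Hq. unfold msum, mmul.
apply (cv_ext (fun K => rsum n (fun k1 => rsum n (fun k2 => rsum K (fun n1 => rsum K (fun m =>
   rsum (S n1) (fun i => rsum (S m) (fun j => a (n1 - i)%nat p k1 * z i j k1 k2 * c (m - j)%nat k2 q)))))))).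
{ intros K. symmetry.
  rewrite <- pull2out. apply rsum_ext; intros n1 _.
  rewrite <- pull2out. apply rsum_ext; intros m _.
  rewrite <- pull2out. apply rsum_ext; intros i _.
  rewrite <- pull2out. apply rsum_ext; intros j _.
  rewrite rsum_swap. apply rsum_ext; intros k2 _. rewrite <- rsum_scal_r. auto. }
assert (EL : rsum n (fun k2 => rsum n (fun k1 => A p k1 * Z k1 k2) * Cc k2 q) =
   rsum n (fun k1 => rsum n (fun k2 => A p k1 * Z k1 k2 * Cc k2 q))).
{ symmetry. rewrite rsum_swap. apply rsum_ext; intros. rewrite <- rsum_scal_r. auto. }
rewrite EL.
apply cv_rsum. intros k1 Hk1. apply cv_rsum. intros k2 Hk2.
destruct (Ha p k1) as [Ba HBa]; auto. destruct (Hc k2 q) as [Bc HBc]; auto.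
destruct (Hz k1 k2) as [Bz HBz]; auto.
apply (cauchy2 (fun t => a t p k1) (fun t => c t k2 q) (fun i j => z i j k1 k2) Ba Bc Bz); auto.
- apply HA; auto.
- apply HC; auto.
- apply HZ; auto.
Qed.

Lemma msumL_app l1 l2 : msumL (l1 ++ l2) = madd (msumL l1) (msumL l2).
Proof. induction l1; simpl.
- extensionality i; extensionality j. unfold madd, mzero. ring.
- rewrite IHl1. extensionality i; extensionality j. unfold madd. ring. Qed.

Lemma msumL_flat_map {A B} (F : B -> mat) (G : A -> list B) l :
  msumL (map F (flat_map G l)) = msumL (map (fun x => msumL (map F (G x))) l).
Proof. induction l; simpl; auto. rewrite map_app, msumL_app, IHl. auto. Qed.

Lemma msumL_map_ext {A} (F G : A -> mat) l : (forall x, In x l -> F x = G x) ->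
  msumL (map F l) = msumL (map G l).
Proof. intros H. f_equal. apply map_ext_in. auto. Qed.

Lemma msumL_map_meq {A} n (F G : A -> mat) l : (forall x, In x l -> meq n (F x) (G x)) ->
  meq n (msumL (map F l)) (msumL (map G l)).
Proof. induction l; simpl; intros H. apply meq_refl.
apply madd_meq. apply H; auto. apply IHl; auto. Qed.

Lemma msumL_seq (F : nat -> mat) s n : msumL (map F (seq s n)) = msum n (fun k => F (s + k)%nat).
Proof. revert s. induction n; intros s; simpl.
- extensionality i; extensionality j. reflexivity.
- rewrite IHn. extensionality i; extensionality j. unfold madd, msum.
  rewrite rsum_S_l. rewrite Nat.add_0_r. f_equal. apply rsum_ext; intros. f_equal. lia. Qed.

Lemma mmul_msumL_l {A} n X (F : A -> mat) l : mmul n X (msumL (map F l)) = msumL (map (fun x => mmul n X (F x)) l).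
Proof. induction l; simpl.
- extensionality i; extensionality j. unfold mmul, mzero. apply rsum_zero'. intros; ring.
- rewrite mmul_madd_r, IHl. auto. Qed.
Lemma mmul_msumL_r {A} n X (F : A -> mat) l : mmul n (msumL (map F l)) X = msumL (map (fun x => mmul n (F x) X) l).
Proof. induction l; simpl.
- extensionality i; extensionality j. unfold mmul, mzero. apply rsum_zero'. intros; ring.
- rewrite mmul_madd_l, IHl. auto. Qed.
Lemma mscale_msumL {A} c (F : A -> mat) l : mscale c (msumL (map F l)) = msumL (map (fun x => mscale c (F x)) l).
Proof. induction l; simpl.
- extensionality i; extensionality j. unfold mscale, mzero. ring.
- rewrite <- IHl. extensionality i; extensionality j. unfold mscale, madd. ring. Qed.

Lemma compsF_fuel f n : (n <= f)%nat -> compsF (S f) n = compsF f n.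
Proof. revert n. induction f; intros n Hn.
- replace n with 0%nat by lia. reflexivity.
- destruct n. reflexivity.
  change (flat_map (fun c => map (cons c) (compsF (S f) (S n - c))) (seq 1 (S n)) =
          flat_map (fun c => map (cons c) (compsF f (S n - c))) (seq 1 (S n))).
  rewrite !flat_map_concat_map. f_equal. apply map_ext_in. intros c Hc.
  apply in_seq in Hc. rewrite IHf; auto. lia. Qed.

Lemma compsF_fuel' f n : (n <= f)%nat -> compsF f n = comps n.
Proof. intros H. unfold comps. induction H; auto. rewrite compsF_fuel; auto. Qed.

Lemma comps_S n : comps (S n) = flat_map (fun c => map (cons c) (comps (S n - c))) (seq 1 (S n)).
Proof. unfold comps at 1. simpl compsF.
change (flat_map (fun c => map (cons c) (compsF n (S n - c))) (seq 1 (S n)) =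
        flat_map (fun c => map (cons c) (comps (S n - c))) (seq 1 (S n))).
rewrite !flat_map_concat_map. f_equal. apply map_ext_in. intros c Hc.
apply in_seq in Hc. rewrite compsF_fuel'; auto. lia. Qed.

Lemma comps_0 : comps 0 = [[]]. Proof. reflexivity. Qed.

Lemma msumL_comps_S (F : list nat -> mat) n :
  msumL (map F (comps (S n))) = msum (S n) (fun k => msumL (map (fun c' => F (S k :: c')) (comps (n - k)))).
Proof. rewrite comps_S, msumL_flat_map, msumL_seq. extensionality i; extensionality j. unfold msum.
apply rsum_ext; intros k Hk. rewrite map_map. replace (S n - (1 + k))%nat with (n - k)%nat by lia. auto. Qed.

Lemma comps_nonempty n c : In c (comps (S n)) -> c <> [].
Proof. rewrite comps_S. intros H. apply in_flat_map in H. destruct H as [x [_ Hx]].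
apply in_map_iff in Hx. destruct Hx as [c' [<- _]]. discriminate. Qed.

Section Fpart.
Variable b : nat.
Variable Y : nat -> mat.
Definition Fpart (l : list nat) : mat := fold_right (fun c acc => mmul b (Y c) acc) mid l.
Definition Fsum (n : nat) : mat := msumL (map Fpart (comps n)).

Lemma Fsum_0 : Fsum 0 = mid.
Proof. unfold Fsum. simpl. extensionality i; extensionality j. unfold madd, mzero. ring. Qed.

Lemma Fsum_S n : Fsum (S n) = msum (S n) (fun k => mmul b (Y (S k)) (Fsum (n - k))).
Proof. unfold Fsum at 1. rewrite msumL_comps_S. extensionality i; extensionality j. unfold msum.
apply rsum_ext; intros k Hk. simpl. unfold Fsum. rewrite mmul_msumL_l. auto. Qed.

Lemma rsum_tri_swap n (H : nat -> nat -> R) :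
  rsum n (fun k => rsum (n - k) (fun l => H k l)) = rsum n (fun l => rsum (n - l) (fun k => H k l)).
Proof.
assert (E : forall k, (k < n)%nat -> rsum (n - k) (fun l => H k l) = rsum n (fun l => ind (Nat.ltb (k + l) n) * H k l)).
{ intros k Hk. rewrite <- (rsum_ind_lt n (n - k)) by lia. apply rsum_ext; intros l _.
  unfold ind. destruct (Nat.ltb_spec l (n - k)); destruct (Nat.ltb_spec (k + l) n); try lia; auto. }
assert (E' : forall l, (l < n)%nat -> rsum (n - l) (fun k => H k l) = rsum n (fun k => ind (Nat.ltb (k + l) n) * H k l)).
{ intros l Hl. rewrite <- (rsum_ind_lt n (n - l)) by lia. apply rsum_ext; intros k _.
  unfold ind. destruct (Nat.ltb_spec k (n - l)); destruct (Nat.ltb_spec (k + l) n); try lia; auto. }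
rewrite (rsum_ext n _ _ E), (rsum_ext n _ _ E'). apply rsum_swap. Qed.

Lemma rsum_Sr n f : rsum (S n) f = rsum n f + f n. Proof. reflexivity. Qed.

Lemma lastpart (X : nat -> mat) n :
  msumL (map (fun c => mmul b (Fpart (removelast c)) (X (last c 0%nat))) (comps (S n))) =
  msum (S n) (fun k => mmul b (Fsum (n - k)) (X (S k))).
Proof.
induction n as [n IH] using lt_wf_ind.
set (G := fun c => mmul b (Fpart (removelast c)) (X (last c 0%nat))).
rewrite msumL_comps_S.
assert (HK : forall k t, (k < n)%nat -> (n - k)%nat = S t ->
   msumL (map (fun c' => G (S k :: c')) (comps (n - k))) =
   msum (S t) (fun l => mmul b (Y (S k)) (mmul b (Fsum (t - l)) (X (S l))))).
{ intros k t Hk Ht. rewrite Ht.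
  rewrite (msumL_map_ext _ (fun c' => mmul b (Y (S k)) (G c'))).
  - rewrite <- mmul_msumL_l. unfold G. rewrite IH by lia. rewrite mmul_msum_r. auto.
  - intros c' Hc'. apply comps_nonempty in Hc'. destruct c' as [|c1 r]; [congruence|]. unfold G.
    change (removelast (S k :: c1 :: r)) with (S k :: removelast (c1 :: r)).
    change (last (S k :: c1 :: r) 0%nat) with (last (c1 :: r) 0%nat).
    change (Fpart (S k :: removelast (c1 :: r))) with (mmul b (Y (S k)) (Fpart (removelast (c1 :: r)))).
    apply mmul_assoc. }
extensionality i; extensionality j. unfold msum. rewrite !rsum_Sr. f_equal.
- set (H := fun k l => mmul b (Y (S k)) (mmul b (Fsum (n - 1 - k - l)) (X (S l))) i j).
  rewrite (rsum_ext n _ (fun k => rsum (n - k) (fun l => H k l))).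
  rewrite (rsum_ext n (fun k => mmul b (Fsum (n - k)) (X (S k)) i j) (fun k => rsum (n - k) (fun l => H l k))).
  + apply rsum_tri_swap.
  + intros k Hk. assert (Ht : (n - k)%nat = S (n - k - 1)) by lia. rewrite Ht.
    rewrite Fsum_S, mmul_msum_l. unfold msum. apply rsum_ext; intros l Hl. unfold H.
    rewrite mmul_assoc. replace (n - k - 1 - l)%nat with (n - 1 - l - k)%nat by lia. auto.
  + intros k Hk. rewrite (HK k (n - k - 1)%nat) by lia. unfold msum.
    replace (S (n - k - 1)) with (n - k)%nat by lia. apply rsum_ext; intros l Hl. unfold H.
    replace (n - k - 1 - l)%nat with (n - 1 - k - l)%nat by lia. auto.
- rewrite Nat.sub_diag. rewrite comps_0. simpl map. simpl msumL. unfold madd, mzero, G.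
  rewrite Fsum_0. simpl. ring.
Qed.

Lemma firstpart (F : nat -> mat) m :
  msumL (map (fun d => mmul b (F (hd 0%nat d)) (Fpart (tl d))) (comps (S m))) =
  msum (S m) (fun l => mmul b (F (S l)) (Fsum (m - l))).
Proof. rewrite msumL_comps_S. extensionality i; extensionality j. unfold msum.
apply rsum_ext; intros l Hl. simpl. unfold Fsum. rewrite mmul_msumL_l. auto. Qed.
End Fpart.

Lemma mpow_comm n W k : meq n (mmul n W (mpow n W k)) (mmul n (mpow n W k) W).
Proof. induction k; simpl.
- intros i j Hi Hj. rewrite mmul_mid_r, mmul_mid_l; auto.
- rewrite <- mmul_assoc. apply mmul_meq; [exact IHk | apply meq_refl]. Qed.

Lemma mpow_mtr n W k : meq n (mpow n (mtr W) k) (mtr (mpow n W k)).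
Proof. induction k; simpl.
- rewrite mtr_mid. apply meq_refl.
- eapply meq_trans. apply mmul_meq; [exact IHk | apply meq_refl].
  rewrite <- mtr_mmul. apply mtr_meq. apply mpow_comm. Qed.

Lemma mpow_mscale n c W k : mpow n (mscale c W) k = mscale (c ^ k) (mpow n W k).
Proof. induction k; simpl.
- extensionality i; extensionality j. unfold mscale. ring.
- rewrite IHk, mmul_mscale_l, mmul_mscale_r. extensionality i; extensionality j. unfold mscale. ring. Qed.

Lemma blockavg_msum N blk K F : blockavg N blk (msum K F) = msum K (fun k => blockavg N blk (F k)).
Proof. extensionality p; extensionality q. unfold blockavg, msum. rewrite rsum_scal_l. f_equal.
rewrite (rsum_ext N _ (fun i => rsum K (fun k => rsum N (fun j =>
   if (Nat.eqb (blk i) p && Nat.eqb (blk j) q)%bool then F k i j else 0)))).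
- apply rsum_swap.
- intros i _. rewrite <- rsum_swap. apply rsum_ext; intros j _.
  destruct (andb _ _). auto. rewrite rsum_zero. auto. Qed.

Lemma rsum2_if_scal n m (P : nat -> nat -> bool) c X :
  rsum n (fun i => rsum m (fun j => if P i j then c * X i j else 0)) =
  c * rsum n (fun i => rsum m (fun j => if P i j then X i j else 0)).
Proof. rewrite <- rsum_scal_l. apply rsum_ext; intros. rewrite <- rsum_scal_l.
apply rsum_ext; intros. destruct (P _ _); ring. Qed.

Lemma blockavg_mscale N blk c A : blockavg N blk (mscale c A) = mscale c (blockavg N blk A).
Proof. extensionality p; extensionality q. unfold blockavg, mscale.
rewrite (rsum2_if_scal N N (fun i j => (Nat.eqb (blk i) p && Nat.eqb (blk j) q)%bool)). ring. Qed.

Lemma rsum_telescope K f : rsum K (fun k => f k - f (S k)) = f 0%nat - f K.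
Proof. induction K; simpl. ring. rewrite IHK. ring. Qed.

Lemma cv_term0 (a : nat -> R) B : (forall K, rsum K (fun k => Rabs (a k)) <= B) -> Un_cv a 0.
Proof. intros H. destruct (abs_sum_cv a B H) as [l Hl].
pose proof (CV_minus _ _ _ _ (cv_shift _ _ Hl) Hl) as H2. rewrite Rminus_eq_0 in H2.
apply (cv_ext (fun K => rsum (S K) a - rsum K a)); auto. intros; simpl; ring. Qed.

Lemma neumann_lim N V P : mabs1 N (mpow N V) -> is_inverse N (madd mid (mscale (-1) V)) P ->
  mcv N (fun K => msum K (mpow N V)) P.
Proof. intros H Hinv.
destruct (mabs1_cv _ _ H) as [Sl HS].
set (D := madd mid (mscale (-1) V)).
assert (tele : forall K, meq N (mmul N D (msum K (mpow N V))) (madd mid (mscale (-1) (mpow N V K)))).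
{ intros K i j Hi Hj. rewrite mmul_msum_r. unfold msum.
  rewrite (rsum_ext K _ (fun k => mpow N V k i j - mpow N V (S k) i j)).
  - rewrite rsum_telescope. unfold madd, mscale. simpl. ring.
  - intros k _. unfold D. rewrite mmul_madd_l, mmul_mscale_l. unfold madd, mscale.
    rewrite mmul_mid_l by auto. rewrite (mpow_comm N V k i j Hi Hj). simpl. ring. }
assert (L1 : mcv N (fun K => mmul N D (msum K (mpow N V))) (mmul N D Sl)).
{ apply mcv_mmul; auto. apply mcv_const. }
assert (L2 : mcv N (fun K => mmul N D (msum K (mpow N V))) mid).
{ apply (mcv_ext N (fun K => madd mid (mscale (-1) (mpow N V K)))).
  - intros K. apply meq_sym. apply tele.
  - intros i j Hi Hj. destruct (H i j Hi Hj) as [B HB].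
    pose proof (cv_term0 _ _ HB) as H0. unfold madd, mscale.
    pose proof CV_plus _ _ _ _ (cv_const (mid i j)) (cv_scal (-1) _ _ H0) as HH.
    rewrite Rmult_0_r, Rplus_0_r in HH. exact HH. }
assert (DS : meq N (mmul N D Sl) mid) by (eapply mcv_unique; eauto).
apply (mcv_lim N _ Sl P); auto.
intros i j Hi Hj. symmetry.
rewrite <- (mmul_mid_r N P i j Hj).
rewrite <- (mmul_meq N P P _ _ (meq_refl N P) DS i j Hi Hj).
rewrite <- mmul_assoc.
rewrite (mmul_meq N (mmul N P D) mid Sl Sl); auto. apply mmul_mid_l; auto.
- intros i' j' Hi' Hj'. apply (Hinv i' j' Hi' Hj').
- apply meq_refl.
Qed.

Definition unitm i j : mat := fun p q => if (Nat.eqb p i && Nat.eqb q j)%bool then 1 else 0.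

Lemma unit_sandwich b A i j : (i < b)%nat -> (j < b)%nat ->
  mmul b (mmul b (unitm i i) A) (unitm j j) = mscale (A i j) (unitm i j).
Proof. intros Hi Hj. extensionality p; extensionality q. unfold mmul, mscale, unitm.
assert (E1 : forall k, rsum b (fun l => (if (Nat.eqb p i && Nat.eqb l i)%bool then 1 else 0) * A l k) =
   if Nat.eqb p i then A i k else 0).
{ intros k. destruct (Nat.eqb p i); simpl.
  - rewrite (rsum_ext b _ (fun l => if Nat.eqb l i then A l k else 0)).
    apply (rsum_delta b i (fun l => A l k)); auto.
    intros l _. destruct (Nat.eqb l i); ring.
  - apply rsum_zero'. intros; ring. }
rewrite (rsum_ext b _ (fun k => (if Nat.eqb p i then A i k else 0) *
   (if (Nat.eqb k j && Nat.eqb q j)%bool then 1 else 0))) by (intros; rewrite E1; auto).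
destruct (Nat.eqb p i); destruct (Nat.eqb q j); simpl.
- rewrite (rsum_ext b _ (fun k => if Nat.eqb k j then A i k else 0)).
  rewrite (rsum_delta b j (fun k => A i k)); auto. ring.
  intros k _. destruct (Nat.eqb k j); simpl; ring.
- rewrite ?Rmult_0_r. apply rsum_zero'. intros k _. destruct (Nat.eqb k j); simpl; ring.
- rewrite ?Rmult_0_r. apply rsum_zero'. intros k _. ring.
- rewrite ?Rmult_0_r. apply rsum_zero'. intros k _. ring.
Qed.

Section Norm.
Variable b : nat.
Variable nrm : mat -> R.
Hypothesis Hn : is_submult_norm b nrm.

Lemma nrm_meq A B : meq b A B -> nrm A = nrm B.
Proof. destruct Hn as [H _]. intros E. apply H. exact E. Qed.
Lemma nrm_pos A : 0 <= nrm A. Proof. destruct Hn as [_ [H _]]. apply H. Qed.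
Lemma nrm_scale c A : nrm (mscale c A) = Rabs c * nrm A. Proof. destruct Hn as [_ [_ [_ [H _]]]]. apply H. Qed.
Lemma nrm_add A B : nrm (madd A B) <= nrm A + nrm B. Proof. destruct Hn as [_ [_ [_ [_ [H _]]]]]. apply H. Qed.
Lemma nrm_mul A B : nrm (mmul b A B) <= nrm A * nrm B. Proof. destruct Hn as [_ [_ [_ [_ [_ H]]]]]. apply H. Qed.

Lemma nrm_zero : nrm mzero = 0.
Proof. replace mzero with (mscale 0 mzero). rewrite nrm_scale, Rabs_R0. ring.
extensionality i; extensionality j. unfold mscale, mzero. ring. Qed.

Lemma nrm_msum K F : nrm (msum K F) <= rsum K (fun k => nrm (F k)).
Proof. induction K; simpl.
- replace (msum 0 F) with mzero. rewrite nrm_zero. lra. extensionality i; extensionality j. reflexivity.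
- rewrite msum_S. eapply Rle_trans. apply nrm_add. lra. Qed.

Lemma entry_bound i j : (i < b)%nat -> (j < b)%nat ->
  exists C, 0 <= C /\ forall A, Rabs (A i j) <= C * nrm A.
Proof. intros Hi Hj.
assert (Hu : 0 < nrm (unitm i j)).
{ destruct (nrm_pos (unitm i j)) as [H|H]; auto. exfalso.
  destruct Hn as [_ [_ [Hd _]]]. specialize (Hd _ (eq_sym H) i j Hi Hj). unfold unitm in Hd.
  rewrite !Nat.eqb_refl in Hd. simpl in Hd. lra. }
exists (nrm (unitm i i) * nrm (unitm j j) / nrm (unitm i j)). split.
{ unfold Rdiv. apply Rmult_le_pos. apply Rmult_le_pos; apply nrm_pos. left. apply Rinv_0_lt_compat; auto. }
intros A.
assert (H1 : Rabs (A i j) * nrm (unitm i j) <= nrm (unitm i i) * nrm A * nrm (unitm j j)).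
{ rewrite <- nrm_scale, <- (unit_sandwich b A i j Hi Hj). eapply Rle_trans. apply nrm_mul.
  apply Rmult_le_compat_r. apply nrm_pos. apply nrm_mul. }
apply (Rmult_le_reg_r (nrm (unitm i j))); auto. unfold Rdiv.
replace (nrm (unitm i i) * nrm (unitm j j) * / nrm (unitm i j) * nrm A * nrm (unitm i j))
  with (nrm (unitm i i) * nrm A * nrm (unitm j j)) by (field; lra). auto. Qed.

Lemma mabs1_of_nrm (a : nat -> mat) B : (forall K, rsum K (fun k => nrm (a k)) <= B) -> mabs1 b a.
Proof. intros HB i j Hi Hj. destruct (entry_bound i j Hi Hj) as [C [HC HCb]].
exists (C * B). intros K. apply Rle_trans with (C * rsum K (fun k => nrm (a k))).
- rewrite <- rsum_scal_l. apply rsum_le. intros. apply HCb.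
- apply Rmult_le_compat_l; auto. Qed.

Lemma mabs2_of_nrm (z : nat -> nat -> mat) B :
  (forall K, rsum K (fun k => rsum K (fun l => nrm (z k l))) <= B) -> mabs2 b z.
Proof. intros HB i j Hi Hj. destruct (entry_bound i j Hi Hj) as [C [HC HCb]].
exists (C * B). intros K. apply Rle_trans with (C * rsum K (fun k => rsum K (fun l => nrm (z k l)))).
- rewrite <- rsum_scal_l. apply rsum_le. intros. rewrite <- rsum_scal_l. apply rsum_le. intros. apply HCb.
- apply Rmult_le_compat_l; auto. Qed.
End Norm.

Lemma growing_le_lim (u : nat -> R) l : (forall K, u K <= u (S K)) -> Un_cv u l -> forall K, u K <= l.
Proof. intros Hg Hl K. apply Rnot_lt_le. intros Hlt.
destruct (Hl (u K - l)) as [N HN]. lra.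
assert (Hm : forall n, (K <= n)%nat -> u K <= u n).
{ intros n Hn. induction Hn. lra. specialize (Hg m). lra. }
specialize (HN (max N K) (Nat.le_max_l _ _)). specialize (Hm (max N K) (Nat.le_max_r _ _)).
unfold R_dist in HN. rewrite Rabs_right in HN by lra. lra. Qed.

Section FsumBound.
Variable b : nat.
Variable nrm : mat -> R.
Hypothesis Hn : is_submult_norm b nrm.
Variable Y : nat -> mat.
Variables g s : R.
Hypothesis Hs1 : s < 1.
Hypothesis Hs : forall K, rsum K (fun n => Rabs g ^ S n * nrm (Y (S n))) <= s.

Lemma Fsum_bound K : rsum K (fun n => nrm (mscale (g ^ n) (Fsum b Y n))) <= nrm mid / (1 - s).
Proof.
set (a := fun n => nrm (mscale (g ^ n) (Fsum b Y n))).
set (beta := fun k => Rabs g ^ S k * nrm (Y (S k))).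
assert (Ha0 : a 0%nat = nrm mid).
{ unfold a. rewrite Fsum_0. simpl. rewrite (nrm_scale b nrm Hn), Rabs_R1. ring. }
assert (Hapos : forall n, 0 <= a n) by (intros; apply (nrm_pos b nrm Hn)).
assert (Hbpos : forall n, 0 <= beta n).
{ intros. unfold beta. apply Rmult_le_pos. apply pow_le, Rabs_pos. apply (nrm_pos b nrm Hn). }
assert (HaS : forall n, a (S n) <= rsum (S n) (fun k => beta k * a (n - k)%nat)).
{ intros n. unfold a. rewrite Fsum_S, <- msum_mscale.
  eapply Rle_trans. apply (nrm_msum b nrm Hn). apply rsum_le. intros k Hk.
  replace (g ^ S n) with (g ^ S k * g ^ (n - k)) by (rewrite <- pow_add; f_equal; lia).
  replace (mscale (g ^ S k * g ^ (n - k)) (mmul b (Y (S k)) (Fsum b Y (n - k))))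
    with (mmul b (mscale (g ^ S k) (Y (S k))) (mscale (g ^ (n - k)) (Fsum b Y (n - k)))).
  2:{ rewrite mmul_mscale_l, mmul_mscale_r. extensionality i; extensionality j. unfold mscale. ring. }
  eapply Rle_trans. apply (nrm_mul b nrm Hn). unfold beta. rewrite (nrm_scale b nrm Hn).
  rewrite RPow_abs. lra. }
assert (HT : forall K, rsum (S K) a <= a 0%nat + s * rsum (S K) a).
{ intros K0. rewrite (rsum_S_l K0 a) at 1.
  apply Rplus_le_compat_l.
  eapply Rle_trans. apply rsum_le. intros n _. apply HaS.
  rewrite (rsum_tri K0 (fun p i => beta i * a p)).
  apply Rle_trans with (rsum K0 (fun p => rsum K0 (fun i => beta i * a p))).
  { apply rsum_le; intros p _. apply rsum_le; intros i _. pose proof (ind01 (Nat.ltb (p + i) K0)).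
    assert (0 <= beta i * a p) by (apply Rmult_le_pos; auto). nra. }
  rewrite (rsum_ext K0 _ (fun p => rsum K0 (fun i => a p * beta i))) by (intros; apply rsum_ext; intros; ring).
  rewrite <- rsum_prod. rewrite Rmult_comm.
  apply Rle_trans with (s * rsum K0 a).
  { apply Rmult_le_compat_r. apply rsum_nonneg; auto. unfold beta. apply Hs. }
  apply Rmult_le_compat_l.
  - apply Rle_trans with (rsum K0 beta). apply rsum_nonneg; auto. apply Hs.
  - apply (rsum_mono K0 (S K0) a); auto. }
apply Rle_trans with (rsum (S K) a). apply rsum_mono; auto.
specialize (HT K). apply (Rmult_le_reg_r (1 - s)). lra. unfold Rdiv.
rewrite Rmult_assoc, Rinv_l by lra. lra. Qed.
End FsumBound.

Lemma Lpart_Fpart b E kap l : Lpart b E kap l = Fpart b (fun c => mmul b (kap c) E) l.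
Proof. reflexivity. Qed.
Lemma Rpart_Fpart b E kap l : Rpart b E kap l = Fpart b (fun d => mmul b E (mtr (kap d))) l.
Proof. reflexivity. Qed.

Lemma Fpart_last b Y c : c <> [] -> meq b (Fpart b Y c) (mmul b (Fpart b Y (removelast c)) (Y (last c 0%nat))).
Proof. induction c as [|x r IH]; intros H; [congruence|].
destruct r as [|y r].
- simpl. intros i j Hi Hj. rewrite mmul_mid_r, mmul_mid_l; auto.
- change (Fpart b Y (x :: y :: r)) with (mmul b (Y x) (Fpart b Y (y :: r))).
  change (removelast (x :: y :: r)) with (x :: removelast (y :: r)).
  change (last (x :: y :: r) 0%nat) with (last (y :: r) 0%nat).
  change (Fpart b Y (x :: removelast (y :: r))) with (mmul b (Y x) (Fpart b Y (removelast (y :: r)))).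
  rewrite mmul_assoc. apply mmul_meq. apply meq_refl. apply IH. discriminate. Qed.

Lemma chainK_split b E kap c : c <> [] ->
  meq b (chainK b E kap c) (mmul b (Lpart b E kap (removelast c)) (kap (last c 0%nat))).
Proof. induction c as [|x r IH]; intros H; [congruence|].
destruct r as [|y r].
- simpl. intros i j Hi Hj. rewrite mmul_mid_l; auto.
- change (chainK b E kap (x :: y :: r)) with (mmul b (mmul b (kap x) E) (chainK b E kap (y :: r))).
  change (removelast (x :: y :: r)) with (x :: removelast (y :: r)).
  change (last (x :: y :: r) 0%nat) with (last (y :: r) 0%nat).
  change (Lpart b E kap (x :: removelast (y :: r))) with (mmul b (mmul b (kap x) E) (Lpart b E kap (removelast (y :: r)))).
  rewrite (mmul_assoc b (mmul b (kap x) E)). apply mmul_meq. apply meq_refl. apply IH. discriminate. Qed.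

Lemma Fsum_last b Y n : meq b (Fsum b Y (S n)) (msum (S n) (fun k => mmul b (Fsum b Y (n - k)) (Y (S k)))).
Proof. rewrite <- (lastpart b Y Y n). unfold Fsum. apply msumL_map_meq. intros c Hc.
apply Fpart_last. eapply comps_nonempty; eauto. Qed.

Lemma msumL_flat_map' {A} (G : A -> list mat) l :
  msumL (flat_map G l) = msumL (map (fun x => msumL (G x)) l).
Proof. induction l; simpl; auto. rewrite msumL_app, IHl. auto. Qed.

Section Cumulants.
Variables (N b : nat) (blk : nat -> nat) (W : mat) (kap : nat -> mat) (kap2 : nat -> nat -> mat).
Let E := Emat N blk.
Let YL := fun c => mmul b (kap c) E.
Let YR := fun d => mmul b E (mtr (kap d)).
Let Y2 := fun i j => madd (kap2 i j) (mmul b (mmul b (kap i) E) (mtr (kap j))).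
Hypothesis Hc : are_motif_cumulants N b blk W kap kap2.

Lemma mu_n0 n : meq b (mu N blk W (S n) 0) (msum (S n) (fun k => mmul b (Fsum b YL (n - k)) (kap (S k)))).
Proof. destruct Hc as [H1 _]. intros p q Hp Hq. rewrite H1 by (auto; lia).
rewrite <- (lastpart b YL kap n).
refine (msumL_map_meq b _ _ _ _ p q Hp Hq). intros c Hc'. apply chainK_split. eapply comps_nonempty; eauto. Qed.

Lemma mu_nm n m : meq b (mu N blk W (S n) (S m))
  (msum (S n) (fun k => mmul b (Fsum b YL (n - k)) (msum (S m) (fun l => mmul b (Y2 (S k) (S l)) (Fsum b YR (m - l)))))).
Proof. destruct Hc as [_ H2]. intros p q Hp Hq. rewrite H2 by (auto; lia).
rewrite msumL_flat_map'.
rewrite <- (lastpart b YL (fun i => msum (S m) (fun l => mmul b (Y2 i (S l)) (Fsum b YR (m - l)))) n).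
f_equal. f_equal. extensionality c.
rewrite <- (firstpart b YR (Y2 (last c 0%nat)) m).
rewrite mmul_msumL_l. f_equal. apply map_ext. intros d. unfold mixterm. simpl.
rewrite mmul_assoc. reflexivity. Qed.

Lemma mu_0m m p q : (0 < N)%nat -> mu N blk W 0 m p q = mu N blk W m 0 q p.
Proof. intros HN. unfold mu. rewrite Nat.add_0_l, Nat.add_0_r. f_equal.
unfold blockavg. rewrite Rmult_comm with (r1 := bsize N blk p). f_equal.
rewrite rsum_swap. apply rsum_ext; intros j Hj. apply rsum_ext; intros i Hi.
rewrite Bool.andb_comm. destruct (andb _ _); auto.
simpl mpow at 1. simpl mpow at 2.
rewrite mmul_mid_l, mmul_mid_r by auto. rewrite (mpow_mtr N W m i j Hi Hj). reflexivity. Qed.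
End Cumulants.

#[global] Instance meq_equiv n : Equivalence (meq n).
Proof. split. intros A; apply meq_refl. intros A B; apply meq_sym. intros A B C; apply meq_trans. Qed.
#[global] Instance mmul_proper n : Proper (meq n ==> meq n ==> meq n) (mmul n).
Proof. intros A A' HA B B' HB. apply mmul_meq; auto. Qed.
#[global] Instance madd_proper n : Proper (meq n ==> meq n ==> meq n) madd.
Proof. intros A A' HA B B' HB. apply madd_meq; auto. Qed.
#[global] Instance mscale_proper n c : Proper (meq n ==> meq n) (mscale c).
Proof. intros A A' HA. apply mscale_meq; auto. Qed.
#[global] Instance mtr_proper n : Proper (meq n ==> meq n) mtr.
Proof. intros A A' HA. apply mtr_meq; auto. Qed.

Lemma madd_comm A B : madd A B = madd B A.
Proof. extensionality i; extensionality j. unfold madd. ring. Qed.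
Lemma madd_assoc A B C : madd (madd A B) C = madd A (madd B C).
Proof. extensionality i; extensionality j. unfold madd. ring. Qed.
Lemma mtr_madd A B : mtr (madd A B) = madd (mtr A) (mtr B). Proof. reflexivity. Qed.
Lemma mtr_mscale c A : mtr (mscale c A) = mscale c (mtr A). Proof. reflexivity. Qed.

Lemma final_alg b Pl Pr Kg E Ei M :
  meq b (mmul b E Ei) mid -> meq b (mmul b Ei E) mid -> mtr E = E -> mtr Ei = Ei ->
  meq b (mmul b Pl (madd mid (mscale (-1) (mmul b Kg E)))) mid ->
  meq b (mmul b (madd mid (mscale (-1) (mtr (mmul b Kg E)))) Pr) mid ->
  Pr = mtr Pl ->
  meq b (madd (madd (madd Ei (mmul b Pl Kg)) (mtr (mmul b Pl Kg))) (mmul b (mmul b Pl (madd M (mmul b (mmul b Kg E) (mtr Kg)))) Pr))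
        (mmul b (mmul b Pl (madd Ei M)) Pr).
Proof.
intros HEEi HEiE HEt HEit H1 H2 HPr.
assert (HPl : meq b Pl (madd mid (mmul b Pl (mmul b Kg E)))).
{ rewrite <- H1. rewrite mmul_madd_r, mmul_mscale_r. intros i j Hi Hj. unfold madd, mscale.
  rewrite mmul_mid_r by auto. ring. }
assert (HPr' : meq b Pr (madd mid (mmul b (mtr (mmul b Kg E)) Pr))).
{ rewrite <- H2. rewrite mmul_madd_l, mmul_mscale_l. intros i j Hi Hj. unfold madd, mscale.
  rewrite mmul_mid_l by auto. ring. }
assert (HKt : mtr (mmul b Kg E) = mmul b E (mtr Kg)) by (rewrite mtr_mmul, HEt; auto).
rewrite HKt in HPr'.
rewrite (mmul_madd_r b Pl Ei M), (mmul_madd_l b (mmul b Pl Ei) (mmul b Pl M) Pr).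
assert (A1 : meq b (mmul b (mmul b Pl Ei) Pr)
   (madd (madd (madd Ei (mmul b (mtr Kg) Pr)) (mmul b Pl Kg)) (mmul b (mmul b Pl (mmul b (mmul b Kg E) (mtr Kg))) Pr))).
{ rewrite HPl at 1. rewrite mmul_madd_l, mmul_madd_l.
  rewrite (mmul_mid_l' b Ei).
  rewrite (mmul_assoc b Pl (mmul b Kg E) Ei), (mmul_assoc b Kg E Ei), HEEi, (mmul_mid_r' b Kg).
  rewrite HPr' at 1. rewrite mmul_madd_r, (mmul_mid_r' b Ei).
  rewrite <- (mmul_assoc b Ei (mmul b E (mtr Kg))), <- (mmul_assoc b Ei E), HEiE, (mmul_mid_l' b (mtr Kg)).
  rewrite HPr' at 2. rewrite (mmul_madd_r b (mmul b Pl Kg)), (mmul_mid_r' b (mmul b Pl Kg)).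
  intros i j Hi Hj. unfold madd.
  rewrite !mmul_assoc. ring. }
rewrite A1. rewrite HPr. rewrite mtr_mmul.
rewrite (mmul_madd_r b Pl M). rewrite (mmul_madd_l b (mmul b Pl M)).
intros i j Hi Hj. unfold madd. rewrite !mmul_assoc. ring.
Qed.

Lemma rsum_ge_term n f i0 : (forall k, 0 <= f k) -> (i0 < n)%nat -> f i0 <= rsum n f.
Proof. intros Hf Hi. replace n with (S i0 + (n - S i0))%nat by lia. rewrite rsum_split. simpl.
pose proof (rsum_nonneg i0 f (fun k _ => Hf k)).
pose proof (rsum_nonneg (n - S i0) (fun k => f (S (i0 + k))) (fun k _ => Hf _)). lra. Qed.

Lemma bsize_pos N b blk p : is_partition N b blk -> (p < b)%nat -> 0 < bsize N blk p.
Proof. intros [_ H] Hp. destruct (H p Hp) as [i [Hi Hbi]]. unfold bsize.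
eapply Rlt_le_trans; [|apply (rsum_ge_term N _ i)]; auto.
- cbv beta. rewrite Hbi, Nat.eqb_refl. lra.
- intros k. cbv beta. destruct (Nat.eqb _ _); lra. Qed.

Lemma Emat_sym N blk : mtr (Emat N blk) = Emat N blk.
Proof. extensionality p; extensionality q. unfold mtr, Emat. destruct (Nat.eqb_spec q p); subst.
rewrite Nat.eqb_refl; auto. destruct (Nat.eqb_spec p q); auto; lia. Qed.
Lemma Einv_sym N blk : mtr (Einv N blk) = Einv N blk.
Proof. extensionality p; extensionality q. unfold mtr, Einv. destruct (Nat.eqb_spec q p); subst.
rewrite Nat.eqb_refl; auto. destruct (Nat.eqb_spec p q); auto; lia. Qed.

Lemma E_Ei N b blk : is_partition N b blk -> (0 < N)%nat -> meq b (mmul b (Emat N blk) (Einv N blk)) mid.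
Proof. intros Hp HN p q Hpb Hqb. unfold mmul, Emat, Einv, mid.
rewrite (rsum_ext b _ (fun k => if Nat.eqb k p then bsize N blk p / INR N * (if Nat.eqb k q then INR N / bsize N blk k else 0) else 0)).
- rewrite (rsum_delta b p (fun k => bsize N blk p / INR N * (if Nat.eqb k q then INR N / bsize N blk k else 0))); auto.
  pose proof (bsize_pos N b blk p Hp Hpb). assert (0 < INR N) by (apply lt_0_INR; lia).
  destruct (Nat.eqb p q). field. split; lra. ring.
- intros k _. rewrite Nat.eqb_sym. destruct (Nat.eqb_spec k p); subst; auto. ring. Qed.

Lemma Ei_E N b blk : is_partition N b blk -> (0 < N)%nat -> meq b (mmul b (Einv N blk) (Emat N blk)) mid.
Proof. intros Hp HN p q Hpb Hqb. unfold mmul, Emat, Einv, mid.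
rewrite (rsum_ext b _ (fun k => if Nat.eqb k p then INR N / bsize N blk p * (if Nat.eqb k q then bsize N blk k / INR N else 0) else 0)).
- rewrite (rsum_delta b p (fun k => INR N / bsize N blk p * (if Nat.eqb k q then bsize N blk k / INR N else 0))); auto.
  pose proof (bsize_pos N b blk p Hp Hpb). assert (0 < INR N) by (apply lt_0_INR; lia).
  destruct (Nat.eqb p q). field. split; lra. ring.
- intros k _. rewrite Nat.eqb_sym. destruct (Nat.eqb_spec k p); subst; auto. ring. Qed.

Lemma mu00 N b blk W : is_partition N b blk -> (0 < N)%nat -> meq b (mu N blk W 0 0) (Einv N blk).
Proof. intros Hp HN p q Hpb Hqb. unfold mu, blockavg. simpl mpow.
rewrite (rsum_ext N _ (fun i => if Nat.eqb (blk i) p then (if Nat.eqb (blk i) q then 1 else 0) else 0)).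
- unfold Einv. pose proof (bsize_pos N b blk p Hp Hpb). assert (0 < INR N) by (apply lt_0_INR; lia).
  destruct (Nat.eqb_spec p q).
  + subst. rewrite (rsum_ext N _ (fun i => if Nat.eqb (blk i) q then 1 else 0)).
    fold (bsize N blk q). rewrite Nat.add_0_l, pow_O. field. lra. intros i _. destruct (Nat.eqb (blk i) q); auto.
  + destruct (Nat.eqb_spec p q); [lia|]. rewrite rsum_zero'. ring. intros i _. destruct (Nat.eqb_spec (blk i) p); destruct (Nat.eqb_spec (blk i) q); auto; lia.
- intros i Hi. rewrite (rsum_ext N _ (fun j => if Nat.eqb j i then (if (Nat.eqb (blk i) p && Nat.eqb (blk j) q)%bool then 1 else 0) else 0)).
  + rewrite (rsum_delta N i (fun j => if (Nat.eqb (blk i) p && Nat.eqb (blk j) q)%bool then 1 else 0)); auto.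
    destruct (Nat.eqb (blk i) p); auto.
  + intros j Hj. rewrite mmul_mid_l by auto. unfold mid. rewrite (Nat.eqb_sym i j).
    destruct (Nat.eqb_spec j i); subst; destruct (andb _ _); auto. Qed.

Lemma blockavg_cv N blk u L p q : mcv N u L -> Un_cv (fun K => blockavg N blk (u K) p q) (blockavg N blk L p q).
Proof. intros H. unfold blockavg. apply cv_scal. apply cv_rsum. intros i Hi. apply cv_rsum. intros j Hj.
destruct (andb _ _). apply H; auto. apply cv_const. Qed.

Lemma inv_from b K P : meq b (mmul b K P) (madd P (mscale (-1) mid)) ->
  meq b (mmul b P K) (madd P (mscale (-1) mid)) -> is_inverse b (madd mid (mscale (-1) K)) P.
Proof. intros H1 H2 i j Hi Hj. split.
- rewrite mmul_madd_l, mmul_mscale_l. unfold madd, mscale. rewrite mmul_mid_l by auto. rewrite H1 by auto.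
  unfold madd, mscale. ring.
- rewrite mmul_madd_r, mmul_mscale_r. unfold madd, mscale. rewrite mmul_mid_r by auto. rewrite H2 by auto.
  unfold madd, mscale. ring. Qed.

Lemma is_inverse_mtr b A P : is_inverse b A P -> is_inverse b (mtr A) (mtr P).
Proof. intros H i j Hi Hj. destruct (H j i Hj Hi) as [H1 H2]. split.
- rewrite <- mtr_mmul. unfold mtr. rewrite H2. unfold mid. rewrite Nat.eqb_sym. auto.
- rewrite <- mtr_mmul. unfold mtr. rewrite H1. unfold mid. rewrite Nat.eqb_sym. auto. Qed.

Section Inversion.
Variables (b : nat) (Y : nat -> mat) (g : R).
Let ell := fun n => mscale (g ^ n) (Fsum b Y n).
Let Bp := fun k => mscale (g ^ S k) (Y (S k)).

Lemma ell_0 : ell 0%nat = mid.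
Proof. unfold ell. rewrite Fsum_0. extensionality i; extensionality j. unfold mscale. simpl. ring. Qed.

Lemma ell_S m : ell (S m) = msum (S m) (fun k => mmul b (Bp k) (ell (m - k)%nat)).
Proof. unfold ell, Bp. rewrite Fsum_S, <- msum_mscale. extensionality i; extensionality j. unfold msum.
apply rsum_ext; intros k Hk. rewrite mmul_mscale_l, mmul_mscale_r. unfold mscale.
replace (g ^ S m) with (g ^ S k * g ^ (m - k)) by (rewrite <- pow_add; f_equal; lia). ring. Qed.

Lemma ell_S_last m : meq b (ell (S m)) (msum (S m) (fun k => mmul b (ell (m - k)%nat) (Bp k))).
Proof. unfold ell, Bp. rewrite (Fsum_last b Y m). rewrite <- msum_mscale. apply msum_meq. intros k Hk.
rewrite mmul_mscale_l, mmul_mscale_r. intros i j _ _. unfold mscale.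
replace (g ^ S m) with (g ^ (m - k) * g ^ S k) by (rewrite <- pow_add; f_equal; lia). ring. Qed.

Variables (Pl Kl : mat).
Hypotheses (Hell : mabs1 b ell) (HBp : mabs1 b Bp)
  (HPl : mcv b (fun K => msum K ell) Pl) (HKl : mcv b (fun K => msum K Bp) Kl).

Lemma tail_cv : mcv b (fun K => msum K (fun m => ell (S m))) (madd Pl (mscale (-1) mid)).
Proof. intros i j Hi Hj. pose proof (cv_shift _ _ (HPl i j Hi Hj)) as H.
pose proof (CV_minus _ _ _ _ H (cv_const (ell 0%nat i j))) as H2. rewrite ell_0 in H2.
apply (cv_ext (fun K => msum (S K) ell i j - mid i j)).
- intros K. unfold msum. rewrite rsum_S_l. rewrite ell_0. ring.
- unfold madd, mscale. replace (Pl i j + -1 * mid i j) with (Pl i j - mid i j) by ring. exact H2. Qed.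

Lemma KlPl : meq b (mmul b Kl Pl) (madd Pl (mscale (-1) mid)).
Proof. eapply mcv_unique; [apply (mcauchy1 b Bp ell Kl Pl); auto|].
apply (mcv_ext b (fun K => msum K (fun m => ell (S m)))); [|apply tail_cv].
intros K i j Hi Hj. unfold msum. apply rsum_ext. intros m Hm. rewrite ell_S. unfold msum.
rewrite <- (rsum_rev (S m)). apply rsum_ext. intros k Hk. simpl.
rewrite !Nat.sub_0_r. replace (m - (m - k))%nat with k by lia. auto. Qed.

Lemma PlKl : meq b (mmul b Pl Kl) (madd Pl (mscale (-1) mid)).
Proof. eapply mcv_unique; [apply (mcauchy1 b ell Bp Pl Kl); auto|].
apply (mcv_ext b (fun K => msum K (fun m => ell (S m)))); [|apply tail_cv].
intros K i j Hi Hj. unfold msum. apply rsum_ext. intros m Hm. rewrite (ell_S_last m i j Hi Hj). unfold msum.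
rewrite <- (rsum_rev (S m)). apply rsum_ext. intros k Hk. simpl.
rewrite !Nat.sub_0_r. replace (m - (m - k))%nat with k by lia. auto. Qed.
End Inversion.

Lemma mscale_mscale c d A : mscale c (mscale d A) = mscale (c * d) A.
Proof. extensionality i; extensionality j. unfold mscale. ring. Qed.

Lemma mmul_msum2 n K K' F G : mmul n (msum K F) (msum K' G) = msum K (fun k => msum K' (fun l => mmul n (F k) (G l))).
Proof. rewrite mmul_msum_l. f_equal. extensionality k. apply mmul_msum_r. Qed.

Lemma blockavg_msum2 N blk K K' F : blockavg N blk (msum K (fun k => msum K' (fun l => F k l))) =
  msum K (fun k => msum K' (fun l => blockavg N blk (F k l))).
Proof. rewrite blockavg_msum. f_equal. extensionality k. apply blockavg_msum. Qed.

Lemma msum_madd2 K F G : msum K (fun k => msum K (fun l => madd (F k l) (G k l))) =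
  madd (msum K (fun k => msum K (fun l => F k l))) (msum K (fun k => msum K (fun l => G k l))).
Proof. rewrite <- msum_madd. f_equal. extensionality k. apply msum_madd. Qed.

Lemma bilin_box b K (G : nat -> mat) E :
  msum K (fun k => msum K (fun l => mmul b (mmul b (G k) E) (mtr (G l)))) =
  mmul b (mmul b (msum K G) E) (mtr (msum K G)).
Proof. rewrite mmul_msum_l. rewrite mtr_msum. rewrite mmul_msum2. reflexivity. Qed.

Lemma rsum_S_l2 K (F : nat -> nat -> R) :
  rsum (S K) (fun n => rsum (S K) (fun m => F n m)) =
  F 0%nat 0%nat + rsum K (fun n => F (S n) 0%nat) + rsum K (fun m => F 0%nat (S m)) +
  rsum K (fun n => rsum K (fun m => F (S n) (S m))).
Proof. rewrite rsum_S_l. rewrite (rsum_ext K _ (fun n => F (S n) 0%nat + rsum K (fun m => F (S n) (S m)))).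
rewrite rsum_plus. rewrite rsum_S_l. ring. intros. apply rsum_S_l. Qed.

Module Neu.
From HB Require Import structures.
From mathcomp Require Import all_boot all_order all_algebra.
From mathcomp Require Import complex Rstruct.
Import GRing.Theory Num.Theory Order.TTheory.
Local Open Scope ring_scope.

Section Seq.
Local Notation C := (complex Rdefinitions.R).
Implicit Types (y s : nat -> C) (p q : {poly C}) (z : C).

Definition summ y := exists B : C, forall K, \sum_(n < K) `|y n| <= B.
Definition op p s (n : nat) : C := \sum_(k < size p) p`_k * s (n + k)%N.

Lemma summ_ext y y' : y =1 y' -> summ y -> summ y'.
Proof. by move=> e [B HB]; exists B => K; under eq_bigr do rewrite -e. Qed.

Lemma op_wide p s n d : (size p <= d)%N -> op p s n = \sum_(k < d) p`_k * s (n + k)%N.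
Proof.
move=> hd; rewrite /op (big_ord_widen d (fun k => p`_k * s (n + k)%N) hd).
rewrite [RHS](bigID (fun k : 'I_d => (k < size p)%N)) /= [X in _ = _ + X]big1 ?addr0 //.
by move=> k; rewrite -leqNgt => hk; rewrite nth_default // mul0r.
Qed.

Lemma op_XsubC z q s n : op (('X - z%:P) * q) s n = op q s n.+1 - z * op q s n.
Proof.
have hs : (size (('X - z%:P) * q)%R <= (size q).+1)%N.
  apply: leq_trans (size_mul_leq _ _) _; rewrite size_XsubC /=; by [].
rewrite (op_wide _ s n _ hs).
under eq_bigr do rewrite mulrBl coefB coefXM coefCM mulrBl.
rewrite sumrB big_ord_recl /= mul0r add0r.
rewrite (op_wide _ s n _ (leqnSn (size q))) mulr_sumr.
congr (_ - _).
  rewrite /op; apply: eq_bigr => k _ /=; by rewrite addnS addSn.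
by apply: eq_bigr => k _; rewrite mulrA.
Qed.

Lemma summ_base z y : `|z| < 1 -> summ (fun n => y n.+1 - z * y n) -> summ y.
Proof.
move=> hz [B HB].
have hz' : 0 < 1 - `|z| by rewrite subr_gt0.
exists ((`|y 0%N| + B) / (1 - `|z|)) => K.
have step : \sum_(n < K.+1) `|y n| <= (`|y 0%N| + B) / (1 - `|z|).
  rewrite ler_pdivlMr //.
  have h1 : \sum_(n < K) `|y n.+1| <= B + `|z| * \sum_(n < K.+1) `|y n|.
    apply: le_trans (_ : \sum_(n < K) (`|y n.+1 - z * y n| + `|z| * `|y n|) <= _).
      apply: ler_sum => n _.
      have -> : y n.+1 = (y n.+1 - z * y n) + z * y n by rewrite subrK.
      by rewrite (le_trans (ler_normD _ _)) // subrK normrM.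
    rewrite big_split /= lerD // ?HB // -mulr_sumr ler_wpM2l ?normr_ge0 //.
    by rewrite [X in _ <= X]big_ord_recr /= lerDl normr_ge0.
  have h2 : \sum_(n < K.+1) `|y n| <= `|y 0%N| + (B + `|z| * \sum_(n < K.+1) `|y n|).
    by rewrite [X in X <= _]big_ord_recl /= lerD2l.
  by rewrite mulrBr mulr1 lerBlDr -addrA mulrC.
apply: le_trans step; rewrite big_ord_recr /= lerDl normr_ge0 //.
Qed.

Lemma summ_prod rs s : (forall z, z \in rs -> `|z| < 1) ->
  summ (op (\prod_(z <- rs) ('X - z%:P)) s) -> summ s.
Proof.
elim: rs s => [|z rs IH] s hrs.
  rewrite big_nil; apply: summ_ext => n.
  by rewrite /op size_poly1 big_ord1 coefC eqxx mul1r addn0.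
rewrite big_cons => h.
have h1 : summ (op (\prod_(j <- rs) ('X - j%:P)) s).
  apply: (summ_base z); first by apply: hrs; rewrite inE eqxx.
  by apply: summ_ext h => n; rewrite op_XsubC.
by apply: IH h1 => j hj; apply: hrs; rewrite inE hj orbT.
Qed.

Lemma summ_pow n' (A : 'M[C]_n'.+1) :
  (forall z, eigenvalue A z -> `|z| < 1) ->
  forall i j, summ (fun k => (A ^+ k) i j).
Proof.
move=> hA i j.
pose chi := char_poly A.
have [rs Hrs] := closed_field_poly_normal chi.
have lc : lead_coef chi = 1 by apply/monicP; apply: char_poly_monic.
rewrite lc scale1r in Hrs.
have hop : forall n, op chi (fun k => (A ^+ k) i j) n = 0.
  move=> n.
  have CH := Cayley_Hamilton A.
  rewrite -/chi -{1}[chi]coefK poly_def linear_sum /= in CH.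
  have : (A ^+ n * \sum_(k < size chi) horner_mx A (chi`_k *: 'X^k)) i j = 0.
    by rewrite CH mulr0 mxE.
  rewrite mulr_sumr summxE => <-; apply: eq_bigr => k _.
  by rewrite linearZ /= rmorphXn /= horner_mx_X -scalerAr -exprD mxE.
apply: (summ_prod rs).
  move=> z hz; apply: hA; rewrite eigenvalue_root_char -/chi Hrs.
  by rewrite root_prod_XsubC.
rewrite -Hrs; exists 0 => K; rewrite big1 // => n _; by rewrite hop normr0.
Qed.
End Seq.

Lemma sq_lt1 (x y : Rdefinitions.R) : Rlt (Rplus (pow x 2) (pow y 2)) 1 -> x ^+ 2 + y ^+ 2 < 1.
Proof. move=> h; apply/RltP. by rewrite !expr2 /= !Rmult_1_r in h *. Qed.
Local Open Scope complex_scope.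
Local Notation C := (complex Rdefinitions.R).
Local Notation RR := Rdefinitions.R.

Lemma rsum_big (n : nat) (f : nat -> RR) : rsum n f = \sum_(k < n) f k.
Proof. elim: n => [|n IH] /=; first by rewrite big_ord0. by rewrite big_ord_recr /= IH. Qed.

Lemma pow_expr (x : RR) (n : nat) : (x ^ n)%R = x ^+ n.
Proof. by elim: n => [|n IH] //=; rewrite ?exprS ?IH. Qed.

Lemma ReM (x : C) (r : RR) : complex.Re (x * (r%:C)) = complex.Re x * r.
Proof. case: x => a b /=. by rewrite mulr0 subr0. Qed.
Lemma ImM (x : C) (r : RR) : complex.Im (x * (r%:C)) = complex.Im x * r.
Proof. case: x => a b /=. by rewrite mulr0 add0r. Qed.

Lemma ReMul (x y : C) : complex.Re (x * y) = complex.Re x * complex.Re y - complex.Im x * complex.Im y.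
Proof. by case: x => a b; case: y => c d. Qed.
Lemma ImMul (x y : C) : complex.Im (x * y) = complex.Im x * complex.Re y + complex.Re x * complex.Im y.
Proof. case: x => a b; case: y => c d /=. by rewrite addrC. Qed.

Section Bridge.
Variables (n' : nat) (T : mat).
Local Notation N := n'.+1.
Definition Amx : 'M[C]_N := \matrix_(i < N, j < N) ((T j i)%:C).

Lemma Amx_pow k (i j : 'I_N) : (Amx ^+ k) i j = (mpow N T k j i)%:C.
Proof.
elim: k i j => [|k IH] i j.
  rewrite expr0 mxE /= /mid.
  case: (eqVneq i j) => [->|hij]; first by rewrite Nat.eqb_refl.
  case: (PeanoNat.Nat.eqb_spec j i) => [e|_] //.
  by move: hij; rewrite -val_eqE /= e eqxx.
rewrite exprS -mulmxE !mxE /= /mmul rsum_big rmorph_sum /=.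
apply: eq_bigr => l _; rewrite mxE IH rmorphM /= mulrC; congr (_ * _)%R.
Qed.

Lemma Amx_eigen : spectral_radius_lt1 N T -> forall z, eigenvalue Amx z -> `|z| < 1.
Proof.
move=> hsp z /eigenvalueP [v hv vnz].
pose u k := complex.Re (v ord0 (inord k)).
pose w k := complex.Im (v ord0 (inord k)).
have key : forall i : 'I_N, \sum_(l < N) v ord0 l * (T i l)%:C = z * v ord0 i.
  move=> i; move/matrixP: hv => /(_ ord0 i); rewrite !mxE => <-.
  by apply: eq_bigr => l _; rewrite mxE.
have H := hsp (complex.Re z) (complex.Im z) u w.
have hex : exists i, (i < N)%coq_nat /\ (u i <> 0%R \/ w i <> 0%R).
  have : exists i : 'I_N, v ord0 i != 0.
    apply/existsP; apply: contraNT vnz; rewrite negb_exists => /forallP h.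
    by apply/eqP/rowP => i; rewrite mxE; apply/eqP; move: (h i); rewrite negbK.
  case=> i hi; exists (val i); split; first by apply/ssrnat.ltP; exact: ltn_ord.
  rewrite /u /w inord_val.
  case: (v ord0 i) hi => a b hab.
  case: (Req_dec a 0) => [ha|ha]; last by left.
  right => /= hb; move: hab; by rewrite ha hb eqxx.
have heq : forall i, (i < N)%coq_nat ->
    rsum N (fun k => T i k * u k) = complex.Re z * u i - complex.Im z * w i /\
    rsum N (fun k => T i k * w k) = complex.Im z * u i + complex.Re z * w i.
  move=> i /ssrnat.ltP hi; have := key (Ordinal hi).
  move=> /(f_equal (fun x => (complex.Re x, complex.Im x))) [e1 e2].
  have hio : inord i = Ordinal hi by apply: val_inj; rewrite /= inordK.
  rewrite !rsum_big; split.
  + rewrite /u /w hio -ReMul -e1 raddf_sum /=; apply: eq_bigr => l _.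
    by rewrite ReM inord_val mulrC.
  + rewrite /u /w hio -ImMul -e2 raddf_sum /=; apply: eq_bigr => l _.
    by rewrite ImM inord_val mulrC.
have hlt := H hex heq.
rewrite -(expr_lt1 (n := 2)) // -add_Re2_Im2 ltcR.
exact: sq_lt1.
Qed.
End Bridge.

Lemma normC_real (x : RR) : `|x%:C| = `|x|%:C.
Proof. by rewrite normc_def /= expr0n addr0 sqrtr_sqr. Qed.

Lemma neumann_bound (N : nat) (T : mat) : spectral_radius_lt1 N T ->
  forall i j, (i < N)%coq_nat -> (j < N)%coq_nat ->
  exists B : RR, forall K, Rle (rsum K (fun n => Rabs (mpow N T n i j))) B.
Proof.
case: N => [|n'] hsp i j /ssrnat.ltP hi /ssrnat.ltP hj //.
have [B HB] := summ_pow n' (Amx n' T) (@Amx_eigen n' T hsp) (inord j) (inord i).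
exists (complex.Re B) => K; have := HB K.
under eq_bigr do rewrite Amx_pow !inordK // normC_real.
rewrite -rmorph_sum lecE => /andP [_ h]; apply/RleP; rewrite rsum_big.
exact: h.
Qed.

End Neu.

Open Scope R_scope.
Definition neumann_bound := Neu.neumann_bound.

Theorem corollary1 (N b : nat) (W0 : mat) (a w Sx : R) (blk : nat -> nat)
    (kap : nat -> mat) (kap2 : nat -> nat -> mat) (P Q : mat) :
  0 < Sx ->
  spectral_radius_lt1 N (mscale (a * w) W0) ->
  is_inverse N (madd mid (mscale (- (a * w)) W0)) P ->
  is_inverse N (madd mid (mscale (- (a * w)) (mtr W0))) Q ->
  is_partition N b blk ->
  are_motif_cumulants N b blk W0 kap kap2 ->
  (exists nrm : mat -> R, is_submult_norm b nrm /\
     (exists s, Un_cv (fun K => rsum K (fun n =>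
          Rabs (INR N * a * w) ^ (S n) * nrm (mmul b (kap (S n)) (Emat N blk)))) s
        /\ s < 1) /\
     (exists s, Un_cv (fun K => rsum K (fun n =>
          Rabs (INR N * a * w) ^ (S n) * nrm (mmul b (Emat N blk) (mtr (kap (S n)))))) s
        /\ s < 1) /\
     (exists s, Un_cv (fun K => rsum K (fun n => rsum K (fun m =>
          Rabs (INR N * a * w) ^ (S n + S m) * nrm (kap2 (S n) (S m))))) s)) ->
  let g := INR N * a * w in
  let Sy := mscale Sx (mmul N P Q) in
  exists Kl Kr M Pl Pr : mat,
    mseries b (fun n => mscale (g ^ n) (mmul b (kap n) (Emat N blk))) Kl /\
    mseries b (fun m => mscale (g ^ m) (mmul b (Emat N blk) (mtr (kap m)))) Kr /\
    mseries2 b (fun n m => mscale (g ^ (n + m)) (kap2 n m)) M /\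
    is_inverse b (madd mid (mscale (-1) Kl)) Pl /\
    is_inverse b (madd mid (mscale (-1) Kr)) Pr /\
    (forall p q, (p < b)%nat -> (q < b)%nat ->
       blockavg N blk Sy p q / Sx =
       / INR N * mmul b (mmul b Pl (madd (Einv N blk) M)) Pr p q).
Proof.
intros HSx Hsp HP HQ Hpart Hcum Hnorm g Sy.
destruct (Nat.eq_dec b 0) as [Hb0|Hb].
{ subst b. exists mzero, mzero, mzero, mzero, mzero. unfold mseries, mseries2, is_inverse. repeat split; intros; lia. }
assert (HN : (0 < N)%nat). { destruct Hpart as [_ H]. destruct (H 0%nat) as [i [Hi _]]; lia. }
destruct Hnorm as [nrm [Hn [[s1 [Hs1c Hs1]] [[s2 [Hs2c Hs2]] [s3 Hs3c]]]]].
set (E := Emat N blk). set (Ei := Einv N blk).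
set (YL := fun c => mmul b (kap c) E). set (YR := fun d => mmul b E (mtr (kap d))).
set (ell := fun n => mscale (g ^ n) (Fsum b YL n)).
set (rr := fun n => mscale (g ^ n) (Fsum b YR n)).
set (BL := fun k => mscale (g ^ S k) (YL (S k))).
set (BR := fun k => mscale (g ^ S k) (YR (S k))).
set (Gk := fun k => mscale (g ^ S k) (kap (S k))).
set (Mk := fun k l => mscale (g ^ (S k + S l)) (kap2 (S k) (S l))).
set (Zk := fun k l => madd (Mk k l) (mmul b (mmul b (Gk k) E) (mtr (Gk l)))).
assert (HEEi : meq b (mmul b E Ei) mid) by (apply E_Ei; auto).
assert (HEiE : meq b (mmul b Ei E) mid) by (apply Ei_E; auto).
assert (HS1 : forall K, rsum K (fun n => Rabs g ^ S n * nrm (YL (S n))) <= s1).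
{ apply growing_le_lim; [|exact Hs1c]. intros K; simpl.
  assert (0 <= Rabs g ^ S K * nrm (YL (S K))) by (apply Rmult_le_pos; [apply pow_le, Rabs_pos | apply (nrm_pos b nrm Hn)]).
  simpl in H. lra. }
assert (HS2 : forall K, rsum K (fun n => Rabs g ^ S n * nrm (YR (S n))) <= s2).
{ apply growing_le_lim; [|exact Hs2c]. intros K; simpl.
  assert (0 <= Rabs g ^ S K * nrm (YR (S K))) by (apply Rmult_le_pos; [apply pow_le, Rabs_pos | apply (nrm_pos b nrm Hn)]).
  simpl in H. lra. }
assert (HS3 : forall K, rsum K (fun n => rsum K (fun m => Rabs g ^ (S n + S m) * nrm (kap2 (S n) (S m)))) <= s3).
{ apply growing_le_lim; [|exact Hs3c]. intros K.
  apply (box_mono (fun n m => Rabs g ^ (S n + S m) * nrm (kap2 (S n) (S m)))); [|lia].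
  intros. apply Rmult_le_pos; [apply pow_le, Rabs_pos | apply (nrm_pos b nrm Hn)]. }
assert (HellB : forall K, rsum K (fun n => nrm (ell n)) <= nrm mid / (1 - s1)).
{ intros K. apply (Fsum_bound b nrm Hn YL g s1 Hs1 HS1). }
assert (HrrB : forall K, rsum K (fun n => nrm (rr n)) <= nrm mid / (1 - s2)).
{ intros K. apply (Fsum_bound b nrm Hn YR g s2 Hs2 HS2). }
assert (HBLB : forall K, rsum K (fun k => nrm (BL k)) <= s1).
{ intros K. eapply Rle_trans; [|apply (HS1 K)]. right. apply rsum_ext. intros k _. unfold BL.
  rewrite (nrm_scale b nrm Hn), <- RPow_abs. auto. }
assert (HBRB : forall K, rsum K (fun k => nrm (BR k)) <= s2).
{ intros K. eapply Rle_trans; [|apply (HS2 K)]. right. apply rsum_ext. intros k _. unfold BR.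
  rewrite (nrm_scale b nrm Hn), <- RPow_abs. auto. }
assert (HGBL : forall k, meq b (Gk k) (mmul b (BL k) Ei)).
{ intros k. unfold BL, Gk, YL. rewrite mmul_mscale_l, mmul_assoc. rewrite HEEi. rewrite mmul_mid_r'. reflexivity. }
assert (HGkB : forall K, rsum K (fun k => nrm (Gk k)) <= s1 * nrm Ei).
{ intros K. apply Rle_trans with (rsum K (fun k => nrm (BL k) * nrm Ei)).
  - apply rsum_le. intros k _. rewrite (nrm_meq b nrm Hn _ _ (HGBL k)). apply (nrm_mul b nrm Hn).
  - rewrite rsum_scal_r. apply Rmult_le_compat_r. apply (nrm_pos b nrm Hn). auto. }
assert (HMkB : forall K, rsum K (fun k => rsum K (fun l => nrm (Mk k l))) <= s3).
{ intros K. eapply Rle_trans; [|apply (HS3 K)]. right. apply rsum_ext. intros k _. apply rsum_ext. intros l _. unfold Mk.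
  rewrite (nrm_scale b nrm Hn), <- RPow_abs. auto. }
assert (HGG : forall k l, meq b (mmul b (mmul b (Gk k) E) (mtr (Gk l))) (mmul b (BL k) (mmul b Ei (BR l)))).
{ intros k l. unfold Gk, BL, BR, YL, YR.
  rewrite mtr_mscale, !mmul_mscale_l, !mmul_mscale_r, !mscale_mscale.
  rewrite <- (mmul_assoc b Ei E (mtr (kap (S l)))), HEiE, mmul_mid_l'. reflexivity. }
assert (HZkB : forall K, rsum K (fun k => rsum K (fun l => nrm (Zk k l))) <= s3 + s1 * nrm Ei * s2).
{ intros K. apply Rle_trans with (rsum K (fun k => rsum K (fun l => nrm (Mk k l) + nrm (BL k) * nrm Ei * nrm (BR l)))).
  - apply rsum_le; intros k _. apply rsum_le; intros l _. unfold Zk.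
    eapply Rle_trans. apply (nrm_add b nrm Hn). apply Rplus_le_compat_l.
    rewrite (nrm_meq b nrm Hn _ _ (HGG k l)). eapply Rle_trans. apply (nrm_mul b nrm Hn).
    rewrite Rmult_assoc. apply Rmult_le_compat_l. apply (nrm_pos b nrm Hn). apply (nrm_mul b nrm Hn).
  - rewrite (rsum_ext K _ (fun k => rsum K (fun l => nrm (Mk k l)) + nrm (BL k) * nrm Ei * rsum K (fun l => nrm (BR l)))).
    + rewrite rsum_plus. apply Rplus_le_compat. auto. rewrite rsum_scal_r, rsum_scal_r.
      pose proof (rsum_nonneg K (fun k => nrm (BL k)) (fun k _ => nrm_pos b nrm Hn _)).
      pose proof (rsum_nonneg K (fun k => nrm (BR k)) (fun k _ => nrm_pos b nrm Hn _)).
      pose proof (nrm_pos b nrm Hn Ei). pose proof (HBLB K). pose proof (HBRB K).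
      apply Rmult_le_compat; try apply Rmult_le_pos; auto. apply Rmult_le_compat_r; auto.
    + intros k _. rewrite rsum_plus, rsum_scal_l. auto. }
assert (Hell : mabs1 b ell) by (apply (mabs1_of_nrm b nrm Hn _ _ HellB)).
assert (Hrr : mabs1 b rr) by (apply (mabs1_of_nrm b nrm Hn _ _ HrrB)).
assert (HBL : mabs1 b BL) by (apply (mabs1_of_nrm b nrm Hn _ _ HBLB)).
assert (HBR : mabs1 b BR) by (apply (mabs1_of_nrm b nrm Hn _ _ HBRB)).
assert (HGk : mabs1 b Gk) by (apply (mabs1_of_nrm b nrm Hn _ _ HGkB)).
assert (HMk : mabs2 b Mk) by (apply (mabs2_of_nrm b nrm Hn _ _ HMkB)).
assert (HZk : mabs2 b Zk) by (apply (mabs2_of_nrm b nrm Hn _ _ HZkB)).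
destruct (mabs1_cv b ell Hell) as [Pl HPl].
destruct (mabs1_cv b rr Hrr) as [Rt HRt].
destruct (mabs1_cv b Gk HGk) as [Kg HKg].
destruct (mabs2_cv b Mk HMk) as [M HM].
set (Kl := mmul b Kg E). set (Kr := mtr Kl). set (Pr := mtr Pl).
assert (HKl : mcv b (fun K => msum K BL) Kl).
{ apply (mcv_ext b (fun K => mmul b (msum K Gk) E)).
  - intros K. rewrite mmul_msum_l. apply msum_meq. intros k _. unfold Gk, BL, YL. rewrite mmul_mscale_l. reflexivity.
  - apply mcv_mmul; auto. apply mcv_const. }
assert (HKr : mcv b (fun K => msum K BR) Kr).
{ apply (mcv_ext b (fun K => mtr (msum K BL))).
  - intros K. rewrite mtr_msum. apply msum_meq. intros k _. unfold BL, BR, YL, YR.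
    rewrite mtr_mscale, mtr_mmul. unfold E. rewrite Emat_sym. reflexivity.
  - apply mcv_mtr; auto. }
assert (HinvL : is_inverse b (madd mid (mscale (-1) Kl)) Pl).
{ apply inv_from. apply (KlPl b YL g Pl Kl); auto. apply (PlKl b YL g Pl Kl); auto. }
assert (HinvR : is_inverse b (madd mid (mscale (-1) Kr)) Pr).
{ replace (madd mid (mscale (-1) Kr)) with (mtr (madd mid (mscale (-1) Kl))).
  apply is_inverse_mtr; auto. rewrite mtr_madd, mtr_mid, mtr_mscale. reflexivity. }
assert (HKrRt : meq b (mmul b Kr Rt) (madd Rt (mscale (-1) mid))) by (apply (KlPl b YR g Rt Kr); auto).
assert (HRtPr : meq b Rt Pr).
{ assert (H1 : meq b (mmul b (madd mid (mscale (-1) Kr)) Rt) mid).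
  { rewrite mmul_madd_l, mmul_mscale_l, mmul_mid_l', HKrRt. intros i j Hi Hj. unfold madd, mscale. ring. }
  rewrite <- (mmul_mid_l' b Rt).
  assert (H2 : meq b (mmul b Pr (madd mid (mscale (-1) Kr))) mid) by (intros i j Hi Hj; apply (HinvR i j Hi Hj)).
  rewrite <- H2. rewrite mmul_assoc. rewrite H1. apply mmul_mid_r'. }
set (T := mscale (a * w) W0). set (V := mscale (a * w) (mtr W0)).
assert (HPK : mcv N (fun K => msum K (mpow N T)) P).
{ apply neumann_lim.
  - intros i j Hi Hj. apply neumann_bound; auto.
  - replace (madd mid (mscale (-1) T)) with (madd mid (mscale (- (a * w)) W0)); auto.
    unfold T. extensionality i; extensionality j. unfold madd, mscale. ring. }
assert (HQK : mcv N (fun K => msum K (mpow N V)) Q).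
{ apply neumann_lim.
  - intros i j Hi Hj. destruct (neumann_bound N T Hsp j i Hj Hi) as [B HB]. exists B. intros K.
    eapply Rle_trans; [|apply (HB K)]. right. apply rsum_ext. intros n _.
    replace V with (mtr T) by reflexivity. rewrite (mpow_mtr N T n i j Hi Hj). reflexivity.
  - replace (madd mid (mscale (-1) V)) with (madd mid (mscale (- (a * w)) (mtr W0))); auto.
    unfold V. extensionality i; extensionality j. unfold madd, mscale. ring. }
assert (HNz : INR N <> 0) by (apply not_0_INR; lia).
set (XK := fun K => msum K (fun n => msum K (fun m => mscale (g ^ (n + m)) (mu N blk W0 n m)))).
assert (HXid : forall K p q, XK K p q = INR N * blockavg N blk (mmul N (msum K (mpow N T)) (msum K (mpow N V))) p q).
{ intros K p q. rewrite mmul_msum2, blockavg_msum2. unfold XK, msum. rewrite <- rsum_scal_l.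
  apply rsum_ext; intros n _. rewrite <- rsum_scal_l. apply rsum_ext; intros m _.
  unfold T, V. rewrite !mpow_mscale, mmul_mscale_l, mmul_mscale_r, !blockavg_mscale. unfold mscale, mu. unfold g.
  rewrite !pow_add. rewrite !Rpow_mult_distr. field. split; apply pow_nonzero; auto. }
assert (HXlim1 : forall p q, (p < b)%nat -> (q < b)%nat ->
   Un_cv (fun K => XK K p q) (INR N * blockavg N blk (mmul N P Q) p q)).
{ intros p q Hp Hq. apply (cv_ext (fun K => INR N * blockavg N blk (mmul N (msum K (mpow N T)) (msum K (mpow N V))) p q)).
  intros; symmetry; apply HXid. apply cv_scal. apply blockavg_cv. apply mcv_mmul; auto. }
set (Zs := madd M (mmul b (mmul b Kg E) (mtr Kg))).
set (Lim := madd (madd (madd Ei (mmul b Pl Kg)) (mtr (mmul b Pl Kg))) (mmul b (mmul b Pl Zs) Rt)).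
set (partb := fun K => msum K (fun n => mscale (g ^ (S n + 0)) (mu N blk W0 (S n) 0))).
set (partc := fun K => msum K (fun m => mscale (g ^ (0 + S m)) (mu N blk W0 0 (S m)))).
set (partd := fun K => msum K (fun n => msum K (fun m => mscale (g ^ (S n + S m)) (mu N blk W0 (S n) (S m))))).
assert (Hsplit : forall K, XK (S K) = madd (madd (madd (mscale (g ^ (0 + 0)) (mu N blk W0 0 0)) (partb K)) (partc K)) (partd K)).
{ intros K. extensionality p; extensionality q. unfold XK, msum, madd.
  rewrite (rsum_S_l2 K (fun n m => mscale (g ^ (n + m)) (mu N blk W0 n m) p q)). reflexivity. }
assert (HBp : mcv b partb (mmul b Pl Kg)).
{ apply (mcv_ext b (fun K => msum K (fun m => msum (S m) (fun i => mmul b (ell (m - i)%nat) (Gk i))))).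
  - intros K. apply msum_meq. intros n _. rewrite (mu_n0 N b blk W0 kap kap2 Hcum n).
    rewrite <- msum_mscale. apply msum_meq. intros k Hk. unfold ell, Gk.
    rewrite mmul_mscale_l, mmul_mscale_r, mscale_mscale.
    replace (g ^ (S n + 0)) with (g ^ (n - k) * g ^ S k). reflexivity.
    rewrite <- pow_add. f_equal. lia.
  - apply mcauchy1; auto. }
assert (HCp : mcv b partc (mtr (mmul b Pl Kg))).
{ apply (mcv_ext b (fun K => mtr (partb K))).
  - intros K i j Hi Hj. unfold partb, partc, mtr, msum. apply rsum_ext. intros m _. unfold mscale.
    rewrite (mu_0m N blk W0 (S m) i j HN). rewrite Nat.add_0_r, Nat.add_0_l. reflexivity.
  - apply mcv_mtr. auto. }
assert (HZs : mcv b (fun K => msum K (fun k => msum K (fun l => Zk k l))) Zs).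
{ apply (mcv_ext b (fun K => madd (msum K (fun k => msum K (fun l => Mk k l))) (mmul b (mmul b (msum K Gk) E) (mtr (msum K Gk))))).
  - intros K. unfold Zk. rewrite msum_madd2, bilin_box. reflexivity.
  - apply mcv_madd; auto. apply mcv_mmul. apply mcv_mmul; auto. apply mcv_const. apply mcv_mtr; auto. }
assert (HDp : mcv b partd (mmul b (mmul b Pl Zs) Rt)).
{ apply (mcv_ext b (fun K => msum K (fun n1 => msum K (fun m => msum (S n1) (fun i => msum (S m) (fun j =>
     mmul b (mmul b (ell (n1 - i)%nat) (Zk i j)) (rr (m - j)%nat))))))).
  - intros K. apply msum_meq; intros n _. apply msum_meq; intros m _.
    rewrite (mu_nm N b blk W0 kap kap2 Hcum n m).
    rewrite <- msum_mscale. apply msum_meq; intros k Hk. rewrite mmul_msum_r, <- msum_mscale.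
    apply msum_meq; intros l Hl. unfold ell, rr, Zk, Mk, Gk.
    assert (Hmid : madd (mscale (g ^ (S k + S l)) (kap2 (S k) (S l)))
        (mmul b (mmul b (mscale (g ^ S k) (kap (S k))) E) (mtr (mscale (g ^ S l) (kap (S l))))) =
        mscale (g ^ (S k + S l)) (madd (kap2 (S k) (S l)) (mmul b (mmul b (kap (S k)) E) (mtr (kap (S l)))))).
    { rewrite mtr_mscale, !mmul_mscale_l, mmul_mscale_r, mscale_mscale, <- pow_add.
      extensionality i; extensionality j. unfold madd, mscale. ring. }
    rewrite Hmid. repeat rewrite ?mmul_mscale_l, ?mmul_mscale_r, ?mscale_mscale.
    rewrite (mmul_assoc b (Fsum b YL (n - k))).
    match goal with |- meq _ (mscale ?c ?X) (mscale ?d ?Y) => replace d with c; [reflexivity|] end.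
    rewrite <- !pow_add. f_equal. lia.
  - apply mcauchy2; auto. }
assert (H00 : meq b (mscale (g ^ (0 + 0)) (mu N blk W0 0 0)) Ei).
{ rewrite (mu00 N b blk W0 Hpart HN). intros i j _ _. unfold mscale. rewrite Nat.add_0_r, pow_O. rewrite Rmult_1_l. reflexivity. }
assert (HXlim2 : mcv b XK Lim).
{ apply mcv_unshift.
  apply (mcv_ext b (fun K => madd (madd (madd (mscale (g ^ (0 + 0)) (mu N blk W0 0 0)) (partb K)) (partc K)) (partd K))).
  - intros K. rewrite Hsplit. reflexivity.
  - apply mcv_madd; [apply mcv_madd; [apply mcv_madd|]|]; auto.
    apply (mcv_lim b _ (mscale (g ^ (0 + 0)) (mu N blk W0 0 0))); auto. apply mcv_const. }
assert (HLim : forall p q, (p < b)%nat -> (q < b)%nat -> INR N * blockavg N blk (mmul N P Q) p q = Lim p q).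
{ intros p q Hp Hq. eapply UL_sequence; [apply HXlim1|apply HXlim2]; auto. }
assert (HAlg : meq b Lim (mmul b (mmul b Pl (madd Ei M)) Pr)).
{ unfold Lim. rewrite HRtPr. apply final_alg; auto.
  - unfold E. apply Emat_sym.
  - unfold Ei. apply Einv_sym.
  - intros i j Hi Hj. apply (HinvL i j Hi Hj).
  - intros i j Hi Hj. apply (HinvR i j Hi Hj). }
exists Kl, Kr, M, Pl, Pr. split; [|split; [|split; [|split; [|split]]]].
- intros i j Hi Hj. exact (HKl i j Hi Hj).
- intros i j Hi Hj. exact (HKr i j Hi Hj).
- intros i j Hi Hj. exact (HM i j Hi Hj).
- exact HinvL.
- exact HinvR.
- intros p q Hp Hq. unfold Sy. rewrite blockavg_mscale. unfold mscale.
  rewrite <- (HAlg p q Hp Hq). rewrite <- (HLim p q Hp Hq). field. split; [auto|lra].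
Qed.
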